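(* Let $t>0$. For every integer $m\geq1$ and every $y\in\mathbb{C}$ with $|y|<1$, the series below converges and $$2^{m+1}\sum_{j\geq m+1}L_{j-m-1}^{(m+1)}(2jt)\,(e^{-t}y)^j=\frac{(K_{2t}(y))^2-1}{t(K_{2t}(y))^2+(2-t)}\,\big[K_{2t}(y)-1\big]^m.$$
   Context: Pochhammer symbol $(a)_0=1$, $(a)_k=a(a+1)\cdots(a+k-1)$. Laguerre polynomials: $L_n^{(a)}(x):=\frac{1}{n!}\sum_{j=0}^n\frac{(-n)_j}{j!}(a+j+1)_{n-j}x^j$. For $t>0$, $\xi_{2t}(Z):=\frac{Z-1}{Z+1}e^{tZ}$. The function $K_{2t}$ on the open unit disc $\mathbb{D}$ is the Herglotz transform $K_{2t}(y)=\int_{\mathbb{T}}\frac{w+y}{w-y}\eta_{2t}(dw)$ of the spectral distribution $\eta_{2t}$ of the free unitary Brownian motion at time $2t$; it is known (Biane) that $K_{2t}(y)=1+2\sum_{n\ge1}\frac1n e^{-nt}L^{(1)}_{n-1}(2nt)y^n$, that $K_{2t}$ extends continuously to $\overline{\mathbb{D}}$, and that $K_{2t}$ is the compositional inverse of the restriction of $\xi_{2t}$ to the Jordan domain $\Gamma_{2t}=\{Z:\Re Z>0,\ \xi_{2t}(Z)\in\mathbb{D}\}$ (component containing $1$), which $\xi_{2t}$ maps bijectively onto $\mathbb{D}$; in particular $\xi_{2t}(K_{2t}(y))=y$, $\Re K_{2t}(y)>0$, $K_{2t}(0)=1$. *)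

(* Defs.v *)
From Stdlib Require Import Reals Lra Arith ClassicalEpsilon.
Open Scope R_scope.

Definition Cplx : Type := (R * R)%type.
Definition RtoC (r : R) : Cplx := (r, 0).
Definition Cre (z : Cplx) : R := fst z.
Definition Cim (z : Cplx) : R := snd z.
Definition Cadd (z w : Cplx) : Cplx := (fst z + fst w, snd z + snd w).
Definition Copp (z : Cplx) : Cplx := (- fst z, - snd z).
Definition Csub (z w : Cplx) : Cplx := Cadd z (Copp w).
Definition Cmul (z w : Cplx) : Cplx :=
  (fst z * fst w - snd z * snd w, fst z * snd w + snd z * fst w).
Definition Cinv (z : Cplx) : Cplx :=
  (fst z / (fst z ^ 2 + snd z ^ 2), - snd z / (fst z ^ 2 + snd z ^ 2)).
Definition Cdiv (z w : Cplx) : Cplx := Cmul z (Cinv w).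
Definition Cscal (r : R) (z : Cplx) : Cplx := (r * fst z, r * snd z).
Fixpoint Cpow (z : Cplx) (n : nat) : Cplx :=
  match n with O => RtoC 1 | S k => Cmul z (Cpow z k) end.
Definition Cmod (z : Cplx) : R := sqrt (fst z ^ 2 + snd z ^ 2).

Fixpoint Csum (a : nat -> Cplx) (N : nat) : Cplx :=
  match N with O => a O | S k => Cadd (Csum a k) (a (S k)) end.

Definition Cseries_cv (a : nat -> Cplx) (S : Cplx) : Prop :=
  Un_cv (fun N => fst (Csum a N)) (fst S) /\ Un_cv (fun N => snd (Csum a N)) (snd S).

Fixpoint poch (a : R) (k : nat) : R :=
  match k with O => 1 | S i => poch a i * (a + INR i) end.

Definition Laguerre (n : nat) (a x : R) : R :=
  / INR (fact n) *
  sum_f_R0 (fun j => poch (- INR n) j / INR (fact j)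
                     * poch (a + INR j + 1) (n - j) * x ^ j) n.

(* n-th coefficient term of K_{2t}(y) = 1 + 2 sum_{n>=1} (1/n) e^{-nt} L^{(1)}_{n-1}(2nt) y^n *)
Definition Kterm (t : R) (y : Cplx) (n : nat) : Cplx :=
  match n with
  | O => RtoC 1
  | S k => Cscal (2 / INR n * exp (- INR n * t) * Laguerre k 1 (2 * INR n * t)) (Cpow y n)
  end.

Definition K2t (t : R) (y : Cplx) : Cplx :=
  epsilon (inhabits (RtoC 0)) (fun S => Cseries_cv (Kterm t y) S).

(* Main.v *)
Require Import Defs.
From Stdlib Require Import Reals.
Open Scope R_scope.
From Stdlib Require Import Lra Lia Arith FunctionalExtensionality ClassicalEpsilon.
From Coquelicot Require Coquelicot.

Module Aux.

Notation S0 := sum_f_R0.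

Lemma S0_ext (f g : nat -> R) n : (forall i, (i <= n)%nat -> f i = g i) -> S0 f n = S0 g n.
Proof. apply sum_eq. Qed.

Lemma S0_plus (f g : nat -> R) n : S0 (fun i => f i + g i) n = S0 f n + S0 g n.
Proof. apply sum_plus. Qed.

Lemma S0_scal_l (c : R) (f : nat -> R) n : S0 (fun i => c * f i) n = c * S0 f n.
Proof. induction n; simpl; [ring| rewrite IHn; ring]. Qed.

Lemma S0_scal_r (c : R) (f : nat -> R) n : S0 (fun i => f i * c) n = S0 f n * c.
Proof. induction n; simpl; [ring| rewrite IHn; ring]. Qed.

Lemma S0_opp (f : nat -> R) n : S0 (fun i => - f i) n = - S0 f n.
Proof. induction n; simpl; [ring| rewrite IHn; ring]. Qed.

Lemma S0_zero (f : nat -> R) n : (forall i, (i <= n)%nat -> f i = 0) -> S0 f n = 0.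
Proof. intro H. induction n; simpl. apply H; lia. rewrite IHn, H; [ring|lia|intros; apply H; lia]. Qed.

Lemma S0_first (f : nat -> R) n : S0 f (S n) = f 0%nat + S0 (fun i => f (S i)) n.
Proof. induction n; simpl; [ring|]. simpl in IHn. rewrite IHn. ring. Qed.

Lemma S0_rev (f : nat -> R) n : S0 f n = S0 (fun i => f (n - i)%nat) n.
Proof.
  revert f; induction n; intro f. reflexivity.
  rewrite S0_first. rewrite (IHn (fun i => f (S i))).
  change (S0 (fun i => f (S n - i)%nat) (S n)) with
    (S0 (fun i => f (S n - i)%nat) n + f (S n - S n)%nat).
  rewrite Rplus_comm. f_equal.
  apply S0_ext; intros i Hi. f_equal; lia. f_equal; lia.
Qed.

Lemma S0_tri (g : nat -> nat -> R) n :
  S0 (fun l => S0 (fun i => g l i) l) n = S0 (fun i => S0 (fun s => g (i + s)%nat i) (n - i)) n.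
Proof.
  induction n. simpl. replace (0+0)%nat with 0%nat by lia. reflexivity.
  change (S0 (fun l => S0 (fun i => g l i) l) (S n)) with
   (S0 (fun l => S0 (fun i => g l i) l) n + S0 (fun i => g (S n) i) (S n)).
  change (S0 (fun i => S0 (fun s => g (i + s)%nat i) (S n - i)) (S n)) with
   (S0 (fun i => S0 (fun s => g (i + s)%nat i) (S n - i)) n + S0 (fun s => g (S n + s)%nat (S n)) (S n - S n)).
  rewrite IHn.
  replace (S n - S n)%nat with 0%nat by lia. simpl S0 at 3.
  replace (S n + 0)%nat with (S n) by lia.
  change (S0 (fun i => g (S n) i) (S n)) with (S0 (fun i => g (S n) i) n + g (S n) (S n)).
  rewrite <- !Rplus_assoc. f_equal.
  rewrite <- S0_plus.
  apply S0_ext. intros i Hi. replace (S n - i)%nat with (S (n - i)) by lia. simpl.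
  f_equal. f_equal. lia.
  simpl. f_equal. lia.
Qed.

Lemma S0_swap (g : nat -> nat -> R) n m :
  S0 (fun i => S0 (fun j => g i j) m) n = S0 (fun j => S0 (fun i => g i j) n) m.
Proof.
  induction n; simpl. reflexivity.
  rewrite IHn. rewrite <- S0_plus. reflexivity.
Qed.

Lemma S0_widen (f : nat -> R) n m : (n <= m)%nat -> (forall i, (n < i <= m)%nat -> f i = 0) ->
  S0 f m = S0 f n.
Proof.
  intros H Hz. induction m.
  - assert (n = 0)%nat by lia. subst; reflexivity.
  - destruct (Nat.eq_dec n (S m)). subst; reflexivity.
    simpl. rewrite IHm by (lia || (intros; apply Hz; lia)). rewrite Hz by lia. ring.
Qed.

Lemma S0_abs (f : nat -> R) n : Rabs (S0 f n) <= S0 (fun i => Rabs (f i)) n.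
Proof.
  induction n; simpl. lra. eapply Rle_trans. apply Rabs_triang. lra.
Qed.

Lemma S0_le (f g : nat -> R) n : (forall i, (i <= n)%nat -> f i <= g i) -> S0 f n <= S0 g n.
Proof.
  intro H; induction n; simpl. apply H; lia.
  apply Rplus_le_compat. apply IHn; intros; apply H; lia. apply H; lia.
Qed.

Lemma S0_one (f : nat -> R) n k : (k <= n)%nat -> (forall i, (i <= n)%nat -> i <> k -> f i = 0) ->
  S0 f n = f k.
Proof.
  intros Hk H. induction n.
  - assert (k = 0)%nat by lia. subst. reflexivity.
  - simpl. destruct (Nat.eq_dec k (S n)).
    + subst. rewrite S0_zero. ring. intros; apply H; lia.
    + rewrite IHn. rewrite (H (S n)). ring. lia. lia. lia. intros; apply H; lia.
Qed.

Definition ser := nat -> R.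
Definition mul (a b : ser) : ser := fun n => S0 (fun k => a k * b (n - k)%nat) n.
Definition sone : ser := fun n => match n with O => 1 | _ => 0 end.
Definition zer : ser := fun _ => 0.
Definition sadd (a b : ser) : ser := fun n => a n + b n.
Definition sscal (c : R) (a : ser) : ser := fun n => c * a n.
Definition xm (a : ser) : ser := fun n => match n with O => 0 | S k => a k end.
Fixpoint pw (a : ser) (k : nat) : ser := match k with O => sone | S k => mul a (pw a k) end.
Definition th (a : ser) : ser := fun n => INR n * a n.
Fixpoint xmn (k : nat) (a : ser) : ser := match k with O => a | S k => xm (xmn k a) end.
Definition X : ser := xm sone.

Ltac fext := let n := fresh "n" in apply functional_extensionality; intro n.

Lemma mul_comm a b : mul a b = mul b a.
Proof.
  fext. unfold mul. rewrite S0_rev. apply S0_ext. intros i Hi.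
  replace (n - (n - i))%nat with i by lia. ring.
Qed.

Lemma mul_assoc a b c : mul (mul a b) c = mul a (mul b c).
Proof.
  fext. unfold mul.
  transitivity (S0 (fun l => S0 (fun i => a i * b (l - i)%nat * c (n - l)%nat) l) n).
  { apply S0_ext; intros. rewrite <- S0_scal_r. reflexivity. }
  rewrite S0_tri. apply S0_ext; intros i Hi.
  rewrite <- S0_scal_l. apply S0_ext; intros s Hs.
  replace (i + s - i)%nat with s by lia. replace (n - (i + s))%nat with (n - i - s)%nat by lia. ring.
Qed.

Lemma mul_sadd_l a b c : mul (sadd a b) c = sadd (mul a c) (mul b c).
Proof. fext. unfold mul, sadd. rewrite <- S0_plus. apply S0_ext; intros; ring. Qed.

Lemma mul_sadd_r a b c : mul c (sadd a b) = sadd (mul c a) (mul c b).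
Proof. rewrite !(mul_comm c). apply mul_sadd_l. Qed.

Lemma mul_sscal_l k a b : mul (sscal k a) b = sscal k (mul a b).
Proof. fext. unfold mul, sscal. rewrite <- S0_scal_l. apply S0_ext; intros; ring. Qed.

Lemma mul_sscal_r k a b : mul a (sscal k b) = sscal k (mul a b).
Proof. rewrite !(mul_comm a). apply mul_sscal_l. Qed.

Lemma mul_one_l a : mul sone a = a.
Proof.
  fext. unfold mul. rewrite (S0_one _ _ 0). simpl. replace (n-0)%nat with n by lia. ring.
  lia. intros i Hi Hne. destruct i. lia. simpl. ring.
Qed.

Lemma mul_one_r a : mul a sone = a.
Proof. rewrite mul_comm. apply mul_one_l. Qed.

Lemma mul_zer_l a : mul zer a = zer.
Proof. fext. unfold mul, zer. apply S0_zero. intros; ring. Qed.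

Lemma mul_zer_r a : mul a zer = zer.
Proof. rewrite mul_comm. apply mul_zer_l. Qed.

Lemma mul_xm_l a b : mul (xm a) b = xm (mul a b).
Proof.
  fext. unfold mul. destruct n. simpl. ring.
  rewrite S0_first. simpl. rewrite Rmult_0_l, Rplus_0_l. reflexivity.
Qed.

Lemma mul_xm_r a b : mul a (xm b) = xm (mul a b).
Proof. rewrite !(mul_comm a). apply mul_xm_l. Qed.

Lemma mul_loc a a' b n : (forall i, (i <= n)%nat -> a i = a' i) -> mul a b n = mul a' b n.
Proof. intros H. unfold mul. apply S0_ext; intros. rewrite H by lia. reflexivity. Qed.

Lemma mul_loc_r a b b' n : (forall i, (i <= n)%nat -> b i = b' i) -> mul a b n = mul a b' n.
Proof. intros H. unfold mul. apply S0_ext; intros. rewrite H by lia. reflexivity. Qed.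

Lemma th_mul a b : th (mul a b) = sadd (mul (th a) b) (mul a (th b)).
Proof.
  fext. unfold th, mul, sadd. rewrite <- S0_plus, <- S0_scal_l. apply S0_ext; intros i Hi.
  rewrite minus_INR by lia. ring.
Qed.

Lemma th_sadd a b : th (sadd a b) = sadd (th a) (th b).
Proof. fext. unfold th, sadd. ring. Qed.

Lemma th_sscal k a : th (sscal k a) = sscal k (th a).
Proof. fext. unfold th, sscal. ring. Qed.

Lemma th_one : th sone = zer.
Proof. fext. unfold th, sone, zer. destruct n; simpl; ring. Qed.

Lemma th_xm a : th (xm a) = xm (sadd (th a) a).
Proof. fext. unfold th, xm, sadd. destruct n. simpl; ring. rewrite S_INR. ring. Qed.

Lemma sadd_comm a b : sadd a b = sadd b a.
Proof. fext. unfold sadd. ring. Qed.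

Lemma pw_S' a k : pw a (S k) = mul (pw a k) a.
Proof. simpl. apply mul_comm. Qed.

Lemma pw_add a i j : pw a (i + j) = mul (pw a i) (pw a j).
Proof.
  induction i; simpl. rewrite mul_one_l. reflexivity.
  rewrite IHi. rewrite mul_assoc. reflexivity.
Qed.

Lemma pw_mul a b k : pw (mul a b) k = mul (pw a k) (pw b k).
Proof.
  induction k; simpl. rewrite mul_one_l. reflexivity.
  rewrite IHk. rewrite !mul_assoc. f_equal. rewrite <- !mul_assoc. f_equal. apply mul_comm.
Qed.

Lemma pw_one k : pw sone k = sone.
Proof. induction k; simpl. reflexivity. rewrite IHk. apply mul_one_l. Qed.

Lemma th_pw a k : th (pw a (S k)) = sscal (INR (S k)) (mul (pw a k) (th a)).
Proof.
  induction k.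
  - simpl. rewrite th_mul, th_one, mul_zer_r, mul_one_r, mul_one_l.
    fext. unfold sadd, sscal, zer. ring.
  - change (pw a (S (S k))) with (mul a (pw a (S k))).
    rewrite th_mul, IHk. rewrite mul_sscal_r.
    fext. unfold sadd, sscal. rewrite (S_INR (S k)).
    rewrite <- mul_assoc. change (mul a (pw a k)) with (pw a (S k)).
    rewrite (mul_comm (th a)). ring.
Qed.

Lemma xmn_coef k a n : xmn k a n = if Nat.leb k n then a (n - k)%nat else 0.
Proof.
  revert n; induction k; intro n; simpl. replace (n-0)%nat with n by lia. reflexivity.
  unfold xm. destruct n. reflexivity. rewrite IHk. simpl. reflexivity.
Qed.

Lemma mul_xmn_l k a b : mul (xmn k a) b = xmn k (mul a b).
Proof. induction k; simpl. reflexivity. rewrite mul_xm_l, IHk. reflexivity. Qed.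

Lemma mul_xmn_r k a b : mul a (xmn k b) = xmn k (mul a b).
Proof. rewrite !(mul_comm a). apply mul_xmn_l. Qed.

Lemma xmn_add i j a : xmn (i + j) a = xmn i (xmn j a).
Proof. induction i; simpl. reflexivity. rewrite IHi. reflexivity. Qed.

Lemma pw_xm a k : pw (xm a) k = xmn k (pw a k).
Proof.
  induction k; simpl. reflexivity.
  rewrite mul_xm_l, IHk, mul_xmn_r. reflexivity.
Qed.

Lemma pw_X k : pw X k = xmn k sone.
Proof. unfold X. rewrite pw_xm, pw_one. reflexivity. Qed.

Lemma pw_0 a k : pw a k 0%nat = (a 0%nat) ^ k.
Proof. induction k; simpl. reflexivity. unfold mul. simpl. rewrite IHk. ring. Qed.

Definition sdown (a : ser) : ser := fun n => a (S n).

Lemma xm_sdown a : a 0%nat = 0 -> xm (sdown a) = a.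
Proof. intro H. fext. destruct n; simpl. auto. reflexivity. Qed.

Lemma pw_val F j n : F 0%nat = 0 -> (n < j)%nat -> pw F j n = 0.
Proof.
  intros H0 Hn. rewrite <- (xm_sdown F H0). rewrite pw_xm, xmn_coef.
  destruct (Nat.leb j n) eqn:E. apply Nat.leb_le in E. lia. reflexivity.
Qed.

Lemma pw_diag F n : F 0%nat = 0 -> pw F n n = (F 1%nat) ^ n.
Proof.
  intros H0. rewrite <- (xm_sdown F H0) at 1. rewrite pw_xm, xmn_coef.
  rewrite (proj2 (Nat.leb_le n n)) by lia. replace (n - n)%nat with 0%nat by lia.
  rewrite pw_0. reflexivity.
Qed.

Section SR.
Variable step : ser -> nat -> R.
Hypothesis step_loc : forall g h n, (forall i, (i < n)%nat -> g i = h i) -> step g n = step h n.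
Fixpoint sr_aux (k : nat) : ser := match k with O => fun _ => 0 | S k => fun n => step (sr_aux k) n end.
Definition sr : ser := fun n => sr_aux (S n) n.
Lemma sr_aux_stable : forall n k, (n < k)%nat -> sr_aux k n = sr n.
Proof.
  intro n. induction n as [n IH] using (well_founded_induction Wf_nat.lt_wf).
  intros k Hk. destruct k. lia. simpl. unfold sr. simpl.
  apply step_loc. intros i Hi. rewrite IH by lia. rewrite IH by lia. reflexivity.
Qed.
Lemma sr_eq n : sr n = step sr n.
Proof.
  unfold sr at 1. simpl. apply step_loc. intros i Hi. apply sr_aux_stable. lia.
Qed.
End SR.

Lemma inverse_ex (phi : ser) : phi 0%nat <> 0 -> exists psi, mul phi psi = sone.
Proof.
  intro H0.
  set (step := fun (g : ser) (n : nat) => match n with O => / phi 0%nat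
            | S n' => - / phi 0%nat * S0 (fun i => phi (S i) * g (n' - i)%nat) n' end).
  assert (Hl : forall g h n, (forall i, (i < n)%nat -> g i = h i) -> step g n = step h n).
  { intros g h n Hgh. destruct n. reflexivity. simpl. f_equal. apply S0_ext. intros i Hi.
    rewrite Hgh by lia. reflexivity. }
  exists (sr step). fext. unfold mul. destruct n.
  - simpl. rewrite sr_eq by exact Hl. simpl. field. exact H0.
  - rewrite S0_first. rewrite (sr_eq step Hl (S n - 0)%nat). simpl.
    transitivity (phi 0%nat * (- / phi 0%nat * S0 (fun i => phi (S i) * sr step (n - i)%nat) n)
      + S0 (fun i => phi (S i) * sr step (n - i)%nat) n).
    + f_equal.
    + field. exact H0.
Qed.

Definition comp (p F : ser) : ser := fun n => S0 (fun j => p j * pw F j n) n.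

Lemma comp_mul a b F : F 0%nat = 0 -> comp (mul a b) F = mul (comp a F) (comp b F).
Proof.
  intro H0. fext. unfold comp, mul.
  transitivity (S0 (fun i => S0 (fun s => a i * b s * pw F (i + s) n) n) n).
  - transitivity (S0 (fun l => S0 (fun i => a i * b (l - i)%nat * pw F l n) l) n).
    { apply S0_ext; intros. rewrite <- S0_scal_r. reflexivity. }
    rewrite S0_tri. apply S0_ext; intros i Hi.
    rewrite (S0_widen _ (n - i) n) by (lia || (intros; rewrite pw_val by (auto || lia); ring)).
    apply S0_ext; intros s Hs. replace (i + s - i)%nat with s by lia. reflexivity.
  - transitivity (S0 (fun l => S0 (fun i => S0 (fun s => a i * b s * (pw F i l * pw F s (n - l)%nat)) n) n) n).
    + transitivity (S0 (fun i => S0 (fun s => S0 (fun l => a i * b s * (pw F i l * pw F s (n - l)%nat)) n) n) n).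
      * apply S0_ext; intros i Hi. apply S0_ext; intros s Hs.
        rewrite S0_scal_l. f_equal. rewrite pw_add. reflexivity.
      * transitivity (S0 (fun i => S0 (fun l => S0 (fun s => a i * b s * (pw F i l * pw F s (n - l)%nat)) n) n) n).
        { apply S0_ext; intros i Hi. apply (S0_swap (fun s l => a i * b s * (pw F i l * pw F s (n - l)%nat))). }
        apply (S0_swap (fun i l => S0 (fun s => a i * b s * (pw F i l * pw F s (n - l)%nat)) n)).
    + apply S0_ext; intros l Hl.
      rewrite <- (S0_widen (fun k => a k * pw F k l) l n) by (lia || (intros; rewrite pw_val by (auto || lia); ring)).
      rewrite <- (S0_widen (fun k => b k * pw F k (n - l)%nat) (n - l) n) by (lia || (intros; rewrite pw_val by (auto || lia); ring)).
      rewrite <- S0_scal_r. apply S0_ext; intros i Hi. rewrite <- S0_scal_l.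
      apply S0_ext; intros s Hs. ring.
Qed.

Lemma comp_one F : F 0%nat = 0 -> comp sone F = sone.
Proof.
  intro H0. fext. unfold comp. rewrite (S0_one _ _ 0). simpl. ring. lia.
  intros i Hi Hne. destruct i. lia. simpl. ring.
Qed.

Lemma comp_X F : F 0%nat = 0 -> comp X F = F.
Proof.
  intro H0. fext. unfold comp. destruct n.
  - simpl. unfold X, xm. ring_simplify. auto.
  - rewrite (S0_one _ _ 1). unfold X, xm, sone. simpl. rewrite mul_one_r. ring. lia.
    intros i Hi Hne. unfold X, xm, sone. destruct i. ring. destruct i. lia. ring.
Qed.

Lemma comp_pw a F k : F 0%nat = 0 -> comp (pw a k) F = pw (comp a F) k.
Proof.
  intro H0. induction k; simpl. apply comp_one; auto.
  rewrite comp_mul by auto. rewrite IHk. reflexivity.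
Qed.

Lemma comp_inverse_ex F : F 0%nat = 0 -> F 1%nat <> 0 -> exists V, comp V F = X.
Proof.
  intros H0 H1.
  set (step := fun (g : ser) (n : nat) => match n with O => 0
            | S n' => (X n - S0 (fun j => g j * pw F j n) n') / (F 1%nat ^ n) end).
  assert (Hl : forall g h n, (forall i, (i < n)%nat -> g i = h i) -> step g n = step h n).
  { intros g h n Hgh. destruct n. reflexivity. unfold step. f_equal. f_equal. apply S0_ext. intros i Hi.
    rewrite Hgh by lia. reflexivity. }
  exists (sr step). fext. unfold comp. destruct n.
  - simpl. rewrite sr_eq by exact Hl. simpl. unfold X, xm. ring.
  - change (S0 (fun j => sr step j * pw F j (S n)) (S n)) with
      (S0 (fun j => sr step j * pw F j (S n)) n + sr step (S n) * pw F (S n) (S n)).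
    rewrite (sr_eq step Hl (S n)). simpl step. rewrite pw_diag by auto.
    change (X (S n)) with (sone n). simpl pow. field. split; [apply pow_nonzero; auto| auto].
Qed.

Lemma th_xmn_one k : th (xmn k sone) = sscal (INR k) (xmn k sone).
Proof.
  fext. unfold th, sscal. rewrite xmn_coef. destruct (Nat.leb k n) eqn:E.
  - apply Nat.leb_le in E. destruct (Nat.eq_dec n k). subst; reflexivity.
    unfold sone. destruct (n - k)%nat eqn:E2. lia. ring.
  - ring.
Qed.

Lemma mul_th_comp_loc p F G n :
  F 0%nat = 0 ->
  mul (th (comp p F)) G n = S0 (fun j => p j * mul (th (pw F j)) G n) n.
Proof.
  intro H0.
  transitivity (mul (fun i => S0 (fun j => p j * th (pw F j) i) n) G n).
  - apply mul_loc. intros i Hi. unfold th, comp.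
    rewrite (S0_widen (fun j => p j * (INR i * pw F j i)) i n) by (lia || (intros; rewrite pw_val by (auto||lia); ring)).
    rewrite <- S0_scal_l. apply S0_ext; intros; ring.
  - unfold mul. transitivity (S0 (fun i => S0 (fun j => p j * th (pw F j) i * G (n - i)%nat) n) n).
    + apply S0_ext; intros. rewrite <- S0_scal_r. reflexivity.
    + rewrite S0_swap. apply S0_ext; intros. rewrite <- S0_scal_l. apply S0_ext; intros; ring.
Qed.

Lemma pw_inv phi psi k : mul phi psi = sone -> mul (pw psi k) (pw phi k) = sone.
Proof. intro H. rewrite <- pw_mul, mul_comm, H. apply pw_one. Qed.

Theorem lagrange (phi : ser) : phi 0%nat <> 0 ->
  exists V, V 0%nat = 0 /\ forall k n, (1 <= k <= n)%nat ->
    INR n * pw V k n = INR k * pw phi n (n - k)%nat.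
Proof.
  intro Hphi0. destruct (inverse_ex phi Hphi0) as [psi Hpsi].
  set (F := xm psi).
  assert (F0 : F 0%nat = 0) by reflexivity.
  assert (Hpsi0 : psi 0%nat = / phi 0%nat).
  { assert (E := f_equal (fun s => s 0%nat) Hpsi). unfold mul, sone in E. simpl in E.
    field_simplify_eq; auto. lra. }
  assert (F1 : F 1%nat <> 0). { unfold F, xm. rewrite Hpsi0. apply Rinv_neq_0_compat. auto. }
  destruct (comp_inverse_ex F F0 F1) as [V HV].
  exists V. split.
  { assert (E := f_equal (fun s => s 0%nat) HV). unfold comp, X, xm in E. simpl in E.
    rewrite Rmult_1_r in E. exact E. }
  intros k n Hkn.
  set (p := pw V k).
  assert (C1 : comp p F = pw X k). { unfold p. rewrite comp_pw by auto. rewrite HV. reflexivity. }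
  assert (Hj : forall j, (j <= n)%nat ->
            mul (th (pw F j)) (pw phi n) n = if Nat.eq_dec j n then INR n else 0).
  { intros j Hj. destruct j as [|j'].
    - change (pw F 0) with sone. rewrite th_one, mul_zer_l. unfold zer. destruct (Nat.eq_dec 0 n). lia. reflexivity.
    - rewrite th_pw. rewrite mul_sscal_l. unfold sscal.
      unfold F. rewrite pw_xm. rewrite th_xm. rewrite mul_xmn_l, mul_xm_r.
      set (r := (n - S j')%nat).
      assert (En : n = (j' + S r)%nat) by (unfold r; lia).
      assert (Hsh : forall a : ser, xmn j' (xm a) n = a r).
      { intro a. rewrite xmn_coef. rewrite (proj2 (Nat.leb_le j' n)) by lia.
        replace (n - j')%nat with (S r) by lia. reflexivity. }
      rewrite mul_xmn_l. rewrite mul_xm_l. rewrite Hsh.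
      rewrite En. rewrite pw_add.
      replace (mul (mul (pw psi j') (sadd (th psi) psi)) (mul (pw phi j') (pw phi (S r))))
        with (mul (sadd (th psi) psi) (pw phi (S r))).
      2:{ rewrite (mul_comm (pw psi j')). rewrite mul_assoc. f_equal.
          rewrite <- mul_assoc. rewrite pw_inv by exact Hpsi. rewrite mul_one_l. reflexivity. }
      rewrite mul_sadd_l.
      assert (Hth : mul phi (th psi) = sscal (-1) (mul (th phi) psi)).
      { assert (E := th_mul phi psi). rewrite Hpsi, th_one in E.
        fext. assert (E2 := f_equal (fun s => s n0) E). unfold sadd, zer in E2. unfold sscal. lra. }
      assert (Hpp : mul psi (pw phi (S r)) = pw phi r).
      { simpl. rewrite <- mul_assoc. rewrite (mul_comm psi), Hpsi. apply mul_one_l. }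
      rewrite Hpp. unfold sadd.
      destruct r as [|r'].
      + replace (j' + 1)%nat with (S j') by lia. destruct (Nat.eq_dec (S j') (S j')); [|lia].
        unfold mul, th, sone. simpl. ring.
      + destruct (Nat.eq_dec (S j') (j' + S (S r'))). lia.
        assert (Hm : mul (th psi) (pw phi (S (S r'))) = sscal (-1) (mul (th phi) (pw phi r'))).
        { simpl pw. rewrite <- mul_assoc. rewrite (mul_comm (th psi)). rewrite Hth.
          rewrite mul_sscal_l. f_equal. rewrite mul_assoc. rewrite <- (mul_assoc psi phi).
          rewrite (mul_comm psi phi), Hpsi, mul_one_l. reflexivity. }
        rewrite Hm. unfold sscal.
        assert (Ht := f_equal (fun s => s (S r')) (th_pw phi r')). cbv beta in Ht.
        unfold th, sscal in Ht. rewrite (mul_comm (th phi)).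
        assert (mul (pw phi r') (th phi) (S r') = pw phi (S r') (S r')).
        { apply (Rmult_eq_reg_l (INR (S r'))). unfold th. rewrite <- Ht. reflexivity.
          apply not_0_INR. lia. }
        rewrite H. ring. }
  assert (LHS : mul (th (comp p F)) (pw phi n) n = INR k * pw phi n (n - k)%nat).
  { rewrite C1. rewrite pw_X. rewrite th_xmn_one. rewrite mul_sscal_l, mul_xmn_l. unfold sscal.
    rewrite xmn_coef. rewrite (proj2 (Nat.leb_le k n)) by lia. rewrite mul_one_l. reflexivity. }
  rewrite mul_th_comp_loc in LHS by auto.
  rewrite <- LHS. rewrite (S0_one _ _ n). rewrite Hj by lia. destruct (Nat.eq_dec n n); [|lia]. unfold p; ring.
  lia. intros i Hi Hne. rewrite Hj by lia. destruct (Nat.eq_dec i n). lia. ring.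
Qed.

Definition binS (a b : R) : ser := fun n => match n with O => a | 1%nat => b | _ => 0 end.
Definition expS (c : R) : ser := fun n => c ^ n / INR (fact n).
Definition bc (M i : nat) : R := if Nat.leb i M then Binomial.C M i else 0.

Lemma fact_neq0 n : INR (fact n) <> 0.
Proof. apply not_0_INR. apply fact_neq_0. Qed.

Lemma bc_0 M : bc M 0 = 1.
Proof. unfold bc, Binomial.C. simpl. replace (M - 0)%nat with M by lia. field. apply fact_neq0. Qed.

Lemma bc_pascal M i : bc (S M) (S i) = bc M i + bc M (S i).
Proof.
  unfold bc. destruct (le_lt_dec (S i) M).
  - rewrite (proj2 (Nat.leb_le i M)) by lia. rewrite (proj2 (Nat.leb_le (S i) M)) by lia.
    rewrite (proj2 (Nat.leb_le (S i) (S M))) by lia. rewrite Binomial.pascal by lia. reflexivity.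
  - rewrite (proj2 (Nat.leb_gt (S i) M)) by lia. destruct (Nat.eq_dec i M).
    + subst. rewrite (proj2 (Nat.leb_le M M)) by lia. rewrite (proj2 (Nat.leb_le (S M) (S M))) by lia.
      unfold Binomial.C. replace (M - M)%nat with 0%nat by lia.
      replace (S M - S M)%nat with 0%nat by lia. field. repeat split; apply fact_neq0.
    + rewrite (proj2 (Nat.leb_gt i M)) by lia. rewrite (proj2 (Nat.leb_gt (S i) (S M))) by lia. ring.
Qed.

Lemma mul_binS a b c : mul (binS a b) c = sadd (sscal a c) (sscal b (xm c)).
Proof.
  fext. unfold mul, sadd, sscal, xm. destruct n.
  - simpl. ring.
  - rewrite S0_first. destruct n.
    + simpl. ring.
    + rewrite S0_first. rewrite S0_zero. simpl. replace (n - 0)%nat with n by lia. ring.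
      intros; simpl; ring.
Qed.

Lemma pw_binS a b M i : pw (binS a b) M i = bc M i * a ^ (M - i) * b ^ i.
Proof.
  revert i. induction M; intro i.
  - simpl. unfold bc, sone. destruct i. simpl. unfold Binomial.C. simpl. field.
    simpl. ring.
  - simpl pw. rewrite mul_binS. unfold sadd, sscal, xm. destruct i.
    + rewrite IHM. rewrite !bc_0. simpl. replace (M - 0)%nat with M by lia. ring.
    + rewrite !IHM. rewrite bc_pascal.
      destruct (le_lt_dec (S i) M).
      * replace (S M - S i)%nat with (M - i)%nat by lia. replace (M - i)%nat with (S (M - S i)) by lia.
        simpl. ring.
      * unfold bc. rewrite (proj2 (Nat.leb_gt (S i) M)) by lia.
        destruct (Nat.leb i M) eqn:E.
        -- apply Nat.leb_le in E. assert (i = M) by lia. subst.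
           replace (S M - S M)%nat with 0%nat by lia. replace (M - M)%nat with 0%nat by lia. simpl. ring.
        -- ring.
Qed.

Lemma expS_mul c d : mul (expS c) (expS d) = expS (c + d).
Proof.
  fext. unfold mul, expS. rewrite binomial.
  transitivity (S0 (fun i => Binomial.C n i * c ^ i * d ^ (n - i)) n * / INR (fact n)).
  2:{ unfold Rdiv. reflexivity. }
  rewrite <- S0_scal_r.
  apply S0_ext. intros i Hi. unfold Binomial.C. field. repeat split; apply fact_neq0.
Qed.

Lemma expS_0 : expS 0 = sone.
Proof. fext. unfold expS, sone. destruct n. simpl. field. simpl pow. unfold Rdiv. ring. Qed.

Lemma pw_expS c j : pw (expS c) j = expS (INR j * c).
Proof.
  induction j. simpl. rewrite Rmult_0_l. symmetry. apply expS_0.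
  simpl pw. rewrite IHj. rewrite expS_mul. f_equal. rewrite S_INR. ring.
Qed.

Lemma pw_sscal s a j : pw (sscal s a) j = sscal (s ^ j) (pw a j).
Proof.
  induction j. simpl. fext. unfold sscal. ring.
  simpl pw. rewrite IHj. rewrite mul_sscal_l, mul_sscal_r. fext. unfold sscal. simpl. ring.
Qed.

Section Phi.
Variable t : R.
Definition Pp : ser := binS 2 1.
Definition Ee : ser := sscal (exp (- t)) (expS (- t)).
Definition phi : ser := mul Pp Ee.

Lemma pw_phi j : pw phi j = sscal (exp (- t) ^ j) (mul (pw Pp j) (expS (INR j * - t))).
Proof.
  unfold phi. rewrite pw_mul. unfold Ee. rewrite pw_sscal, pw_expS. rewrite mul_sscal_r. reflexivity.
Qed.

Lemma exp_pow_INR x j : exp x ^ j = exp (INR j * x).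
Proof.
  induction j. simpl. rewrite Rmult_0_l, exp_0. reflexivity.
  simpl pow. rewrite IHj, S_INR, <- exp_plus. f_equal. ring.
Qed.

Lemma poch_neg n b : (b <= n)%nat -> poch (- INR n) b * INR (fact (n - b)) = (-1) ^ b * INR (fact n).
Proof.
  induction b; intro Hb.
  - simpl. replace (n - 0)%nat with n by lia. ring.
  - simpl poch. replace ((-1) ^ S b * INR (fact n)) with (-1 * ((-1) ^ b * INR (fact n))) by (simpl; ring).
    replace (fact (n - b)) with ((n - b) * fact (n - S b))%nat in IHb.
    2:{ replace (n - b)%nat with (S (n - S b)) by lia. simpl. lia. }
    rewrite mult_INR, minus_INR in IHb by lia.
    rewrite <- IHb by lia. ring.
Qed.

Lemma poch_nat s k : poch (INR (s + 1)) k * INR (fact s) = INR (fact (s + k)).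
Proof.
  induction k.
  - simpl. replace (s + 0)%nat with s by lia. ring.
  - simpl poch. replace (s + S k)%nat with (S (s + k)) by lia.
    rewrite fact_simpl, mult_INR. rewrite <- IHk. rewrite !S_INR, !plus_INR. change (INR 1) with 1. ring.
Qed.

Lemma Phi_Laguerre n p : pw phi (n + p) n =
  2 ^ p * exp (- (INR (n + p)) * t) * Laguerre n (INR p) (2 * INR (n + p) * t).
Proof.
  rewrite pw_phi. unfold sscal, mul. rewrite exp_pow_INR.
  replace (INR (n + p) * - t) with (- INR (n + p) * t) by ring.
  unfold Laguerre. rewrite S0_rev.
  rewrite <- !S0_scal_l. apply S0_ext. intros b Hb.
  unfold Pp. rewrite pw_binS. unfold expS.
  replace (n - (n - b))%nat with b by lia.
  replace (n + p - (n - b))%nat with (p + b)%nat by lia.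
  unfold bc. rewrite (proj2 (Nat.leb_le (n - b) (n + p))) by lia.
  unfold Binomial.C. replace (n + p - (n - b))%nat with (p + b)%nat by lia.
  assert (H1 := poch_neg n b Hb).
  assert (H2 := poch_nat (p + b) (n - b)).
  replace (p + b + (n - b))%nat with (n + p)%nat in H2 by lia.
  replace (INR p + INR b + 1) with (INR (p + b + 1)) by (rewrite !plus_INR; simpl; ring).
  assert (Hf1 := fact_neq0 (n - b)). assert (Hf2 := fact_neq0 (p + b)). assert (Hf3 := fact_neq0 b).
  assert (Hf4 := fact_neq0 n).
  apply (Rmult_eq_reg_r (INR (fact (n - b)) * INR (fact (p + b)))).
  2:{ apply Rmult_integral_contrapositive; split; auto. }
  transitivity (2 ^ p * exp (- INR (n + p) * t) * / INR (fact n) *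
     ((poch (- INR n) b * INR (fact (n - b))) / INR (fact b) * (poch (INR (p + b + 1)) (n - b) * INR (fact (p+b))) *
     (2 * INR (n + p) * t) ^ b)).
  2:{ field. auto. }
  rewrite H1, H2. rewrite pow_add. rewrite !Rpow_mult_distr.
  replace (- INR (n + p)) with (-1 * INR (n+p)) by ring. rewrite Rpow_mult_distr. rewrite pow1.
  field. repeat split; auto.
Qed.

Lemma th_binS a b : th (binS a b) = binS 0 b.
Proof. fext. unfold th, binS. destruct n. simpl; ring. destruct n. simpl; ring. ring. Qed.

Lemma th_expS c : th (expS c) = sscal c (xm (expS c)).
Proof.
  fext. unfold th, sscal, xm, expS. destruct n. simpl; ring.
  rewrite fact_simpl, mult_INR. simpl pow. field. split. apply fact_neq0. apply not_0_INR; lia.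
Qed.

Lemma binS_0b b : binS 0 b = sscal b X.
Proof. fext. unfold binS, sscal, X, xm, sone. destruct n. ring. destruct n; ring. Qed.

Lemma th_phi : th phi = xm (sadd Ee (sscal (- t) phi)).
Proof.
  unfold phi. rewrite th_mul. unfold Pp. rewrite th_binS, binS_0b.
  unfold Ee. rewrite th_sscal, th_expS.
  unfold X. repeat rewrite ?mul_sscal_l, ?mul_sscal_r, ?mul_xm_l, ?mul_xm_r, ?mul_one_l.
  fext. unfold sadd, sscal, xm. destruct n. ring. ring.
Qed.

Lemma P_th_pw j : mul Pp (th (pw phi j)) =
  sscal (INR j) (xm (sadd (pw phi j) (sscal (- t) (mul Pp (pw phi j))))).
Proof.
  destruct j.
  - simpl. rewrite th_one, mul_zer_r. fext. unfold zer, sscal. ring.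
  - rewrite th_pw, mul_sscal_r. f_equal. rewrite th_phi.
    rewrite (mul_comm (pw phi j)). rewrite <- mul_assoc. rewrite mul_xm_r.
    rewrite mul_xm_l. f_equal.
    rewrite mul_sadd_r, mul_sadd_l, mul_sscal_r, !mul_sscal_l.
    change (mul Pp Ee) with phi. simpl pw. rewrite mul_assoc. reflexivity.
Qed.

Lemma Phi_rec1 j : 2 * pw phi j 1%nat = INR j * (1 - 2 * t) * pw phi j 0%nat.
Proof.
  assert (H := f_equal (fun s => s 1%nat) (P_th_pw j)). cbv beta in H.
  unfold Pp in H. rewrite !mul_binS in H.
  unfold sadd, sscal, xm, th in H. simpl INR in H. lra.
Qed.

Lemma Phi_rec2 j q : 2 * INR (q + 2) * pw phi j (q + 2)%nat + INR (q + 1) * pw phi j (q + 1)%nat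
  = INR j * (1 - 2 * t) * pw phi j (q + 1)%nat - INR j * t * pw phi j q.
Proof.
  assert (H := f_equal (fun s => s (q + 2)%nat) (P_th_pw j)). cbv beta in H.
  unfold Pp in H. rewrite !mul_binS in H.
  unfold sadd, sscal, xm, th in H.
  replace (q + 2)%nat with (S (S q)) in * by lia. replace (q + 1)%nat with (S q) by lia. lra.
Qed.
End Phi.

Section Formal.
Variable t : R.

Definition alpha : ser := fun n => match n with O => 0 | S k => pw (phi t) (S k) k / INR (S k) end.
Definition G (p : nat) : ser := fun n => if Nat.leb p n then pw (phi t) n (n - p)%nat else 0.

Lemma phi0_nz : phi t 0%nat <> 0.
Proof.
  unfold phi, mul, Pp, Ee, binS, sscal, expS. simpl. 
  assert (exp (-t) > 0) by apply exp_pos. intro H1. nra.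
Qed.

Lemma alpha_V : exists V, V = alpha /\ forall k n, (1 <= k <= n)%nat ->
    INR n * pw V k n = INR k * pw (phi t) n (n - k)%nat.
Proof.
  destruct (lagrange (phi t) phi0_nz) as [V [HV0 HV]].
  exists V. split; auto. fext. unfold alpha. destruct n. auto.
  assert (H := HV 1%nat (S n) ltac:(lia)). change (pw V 1) with (mul V sone) in H. rewrite mul_one_r in H.
  replace (S n - 1)%nat with n in H by lia. change (INR 1) with 1 in H. rewrite Rmult_1_l in H.
  rewrite <- H. field. apply not_0_INR. lia.
Qed.

Lemma alpha0 : alpha 0%nat = 0.
Proof. reflexivity. Qed.

Lemma L_alpha k n : (1 <= k <= n)%nat -> INR n * pw alpha k n = INR k * pw (phi t) n (n - k)%nat.
Proof. destruct alpha_V as [V [<- HV]]. apply HV. Qed.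

Lemma th_pw_alpha p : (1 <= p)%nat -> th (pw alpha p) = sscal (INR p) (G p).
Proof.
  intro Hp. fext. unfold th, sscal, G. destruct (Nat.leb p n) eqn:E.
  - apply Nat.leb_le in E. apply L_alpha. lia.
  - apply Nat.leb_gt in E. rewrite pw_val by (auto || lia). ring.
Qed.

Lemma pw_alpha_1 : pw alpha 1 = alpha.
Proof. simpl. apply mul_one_r. Qed.

Lemma th_alpha : th alpha = G 1.
Proof. rewrite <- pw_alpha_1. rewrite th_pw_alpha by lia. fext. unfold sscal. simpl. ring. Qed.

Lemma mul_pw_G1 p : mul (pw alpha p) (G 1) = G (S p).
Proof.
  assert (H := th_pw alpha p). rewrite th_pw_alpha in H by lia. rewrite th_alpha in H.
  fext. assert (E := f_equal (fun s => s n) H). unfold sscal in E. cbv beta in E.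
  apply (Rmult_eq_reg_l (INR (S p))). lra. apply not_0_INR. lia.
Qed.

Lemma G_val p n : (n < p)%nat -> G p n = 0.
Proof. intro H. unfold G. rewrite (proj2 (Nat.leb_gt p n)) by lia. reflexivity. Qed.

Lemma key_coef q n : (1 <= q)%nat -> (1 <= n)%nat ->
  INR n * (2 * G q n + 2 * t * G (q + 1) n + t * G (q + 2) n)
  = 2 * INR q * G q n + INR (q + 1) * G (q + 1) n.
Proof.
  intros Hq Hn.
  destruct (le_lt_dec q n) as [Hle|Hlt].
  2:{ rewrite !G_val by lia. ring. }
  destruct (Nat.eq_dec n q) as [Heq|Hne].
  { subst q. rewrite (G_val (n+1)) by lia. rewrite (G_val (n+2)) by lia.
    ring. }
  destruct (Nat.eq_dec n (q + 1)) as [Heq1|Hne1].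
  { subst. rewrite (G_val (q+2)) by lia. unfold G.
    rewrite (proj2 (Nat.leb_le q (q+1))) by lia. rewrite (proj2 (Nat.leb_le (q+1) (q+1))) by lia.
    replace (q + 1 - q)%nat with 1%nat by lia. replace (q + 1 - (q + 1))%nat with 0%nat by lia.
    assert (H := Phi_rec1 t (q + 1)). rewrite !plus_INR in *. simpl INR in *.
    nra. }
  set (i := (n - q - 2)%nat).
  assert (En : n = (q + i + 2)%nat) by (unfold i; lia).
  unfold G. rewrite (proj2 (Nat.leb_le q n)) by lia. rewrite (proj2 (Nat.leb_le (q+1) n)) by lia.
  rewrite (proj2 (Nat.leb_le (q+2) n)) by lia.
  replace (n - q)%nat with (i + 2)%nat by lia. replace (n - (q+1))%nat with (i + 1)%nat by lia.
  replace (n - (q+2))%nat with i by lia.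
  assert (H := Phi_rec2 t n i).
  set (a := pw (phi t) n (i + 2)%nat) in *. set (b := pw (phi t) n (i + 1)%nat) in *. set (c := pw (phi t) n i) in *.
  rewrite En in H |- *. rewrite !plus_INR in *. simpl INR in *.
  set (Q := INR q) in *. set (I := INR i) in *.
  assert (E : (Q + I + (1 + 1)) * (2 * a + 2 * t * b + t * c) - (2 * Q * a + (Q + 1) * b) =
     ((2 * (I + (1+1)) * a + (I + 1) * b) - ((Q + I + (1+1)) * (1 - 2 * t) * b - (Q + I + (1+1)) * t * c))) by ring.
  lra.
Qed.

Definition Fser (m : nat) : ser := G (m + 1).

Theorem formal_identity m :
  mul (sadd (sadd (sscal 2 sone) (sscal (2 * t) alpha)) (sscal t (pw alpha 2))) (Fser m)
  = mul (sadd (sscal 2 alpha) (pw alpha 2)) (pw alpha m).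
Proof.
  assert (F1 : Fser m = mul (pw alpha m) (G 1)). { unfold Fser. rewrite mul_pw_G1. f_equal. lia. }
  assert (F2 : mul alpha (Fser m) = G (m + 2)).
  { rewrite F1, <- mul_assoc. change (mul alpha (pw alpha m)) with (pw alpha (S m)).
    rewrite mul_pw_G1. f_equal; lia. }
  assert (F3 : mul (pw alpha 2) (Fser m) = G (m + 3)).
  { rewrite F1, <- mul_assoc, <- pw_add. rewrite mul_pw_G1. f_equal; lia. }
  rewrite !mul_sadd_l, !mul_sscal_l, mul_one_l, F2, F3.
  change (mul alpha (pw alpha m)) with (pw alpha (S m)).
  rewrite <- pw_add.
  fext. unfold sadd, sscal. destruct n.
  - unfold Fser. rewrite !G_val by lia. rewrite !pw_val by (reflexivity || lia). ring.
  - assert (Hn : INR (S n) <> 0) by (apply not_0_INR; lia).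
    apply (Rmult_eq_reg_l (INR (S n))); auto.
    assert (A1 := L_alpha (S m) (S n)). assert (A2 := L_alpha (m + 2) (S n)).
    assert (HK := key_coef (m + 1) (S n) ltac:(lia) ltac:(lia)).
    unfold Fser.
    replace (m + 1 + 1)%nat with (m + 2)%nat in HK by lia. replace (m + 1 + 2)%nat with (m + 3)%nat in HK by lia.
    destruct (le_lt_dec (S m) (S n)) as [H1|H1].
    + assert (E1 : INR (S n) * pw alpha (S m) (S n) = INR (S m) * G (m + 1) (S n)).
      { rewrite A1 by lia. unfold G. rewrite (proj2 (Nat.leb_le (m+1) (S n))) by lia.
        f_equal. f_equal. lia. }
      destruct (le_lt_dec (m + 2) (S n)) as [H2|H2].
      * assert (E2 : INR (S n) * pw alpha (m + 2) (S n) = INR (m + 2) * G (m + 2) (S n)).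
        { rewrite A2 by lia. unfold G. rewrite (proj2 (Nat.leb_le (m+2) (S n))) by lia. reflexivity. }
        replace (S m + 1)%nat with (m + 2)%nat by lia.
        replace (INR (S m)) with (INR (m + 1)) in E1 by (f_equal; lia).
        replace (INR (m + 1 + 1)) with (INR (m + 2)) in HK by (f_equal; lia).
        replace (2 + m)%nat with (m + 2)%nat by lia.
        rewrite HK. replace (INR (S n) * (2 * pw alpha (S m) (S n) + pw alpha (m + 2) (S n))) with
          (2 * (INR (S n) * pw alpha (S m) (S n)) + INR (S n) * pw alpha (m + 2) (S n)) by ring.
        rewrite E1, E2. ring.
      * rewrite (G_val (m+2)) by lia. rewrite (G_val (m+3)) by lia.
        rewrite (G_val (m+2)) in HK by lia. rewrite (G_val (m+3)) in HK by lia.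
        replace (INR (S m)) with (INR (m + 1)) in E1 by (f_equal; lia).
        replace (2 + m)%nat with (m + 2)%nat by lia. rewrite (pw_val alpha (m + 2)) by (reflexivity || lia).
        rewrite HK. replace (INR (S n) * (2 * pw alpha (S m) (S n) + 0)) with
          (2 * (INR (S n) * pw alpha (S m) (S n))) by ring. rewrite E1. ring.
    + rewrite !G_val by lia. rewrite !pw_val by (reflexivity || lia). ring.
Qed.

End Formal.

Import Coquelicot.Coquelicot.
Open Scope R_scope.

Lemma Cpow_eq (z : C) n : Defs.Cpow z n = Coquelicot.Complex.Cpow z n.
Proof. induction n. reflexivity. simpl. rewrite IHn. reflexivity. Qed.

Lemma Cpow_mod (z : C) n : Cmod (Defs.Cpow z n) = Cmod z ^ n.
Proof. rewrite Cpow_eq. apply Cmod_pow. Qed.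

Lemma Cpow_add (z : C) i j : @eq C (Defs.Cpow z (i + j)) (Cmult (Defs.Cpow z i) (Defs.Cpow z j)).
Proof. rewrite !Cpow_eq. apply Cpow_add_r. Qed.

Lemma fst_le_Cmod (w : C) : Rabs (fst w) <= Cmod w.
Proof. eapply Rle_trans; [|apply Rmax_Cmod]. apply Rmax_l. Qed.
Lemma snd_le_Cmod (w : C) : Rabs (snd w) <= Cmod w.
Proof. eapply Rle_trans; [|apply Rmax_Cmod]. apply Rmax_r. Qed.

Definition rre (c : ser) (z : C) : nat -> R := fun n => c n * fst (Defs.Cpow z n).
Definition rim (c : ser) (z : C) : nat -> R := fun n => c n * snd (Defs.Cpow z n).
Definition AS (c : ser) (rho : R) := ex_series (fun n => Rabs (c n) * rho ^ n).
Definition val (c : ser) (z : C) : C := (Series (rre c z), Series (rim c z)).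

Lemma AS_re c z : AS c (Cmod z) -> ex_series (fun n => Rabs (rre c z n)).
Proof.
  intro H. apply (ex_series_le (fun n => Rabs (rre c z n)) (fun n => Rabs (c n) * Cmod z ^ n)); [|exact H]. intro n. unfold norm; simpl. unfold abs; simpl.
  rewrite Rabs_Rabsolu. unfold rre. rewrite Rabs_mult. apply Rmult_le_compat_l. apply Rabs_pos.
  rewrite <- Cpow_mod. apply fst_le_Cmod.
Qed.

Lemma AS_im c z : AS c (Cmod z) -> ex_series (fun n => Rabs (rim c z n)).
Proof.
  intro H. apply (ex_series_le (fun n => Rabs (rim c z n)) (fun n => Rabs (c n) * Cmod z ^ n)); [|exact H]. intro n. unfold norm; simpl. unfold abs; simpl.
  rewrite Rabs_Rabsolu. unfold rim. rewrite Rabs_mult. apply Rmult_le_compat_l. apply Rabs_pos.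
  rewrite <- Cpow_mod. apply snd_le_Cmod.
Qed.

Lemma is_series_Un (a : nat -> R) l : is_series a l -> Un_cv (fun N => sum_f_R0 a N) l.
Proof.
  intro H. apply is_lim_seq_Reals. eapply is_lim_seq_ext; [|exact H]. intro n. apply sum_n_Reals.
Qed.

Lemma Csum_fst (f : nat -> C) N : fst (Csum f N) = sum_f_R0 (fun n => fst (f n)) N.
Proof. induction N; simpl. reflexivity. rewrite IHN. reflexivity. Qed.
Lemma Csum_snd (f : nat -> C) N : snd (Csum f N) = sum_f_R0 (fun n => snd (f n)) N.
Proof. induction N; simpl. reflexivity. rewrite IHN. reflexivity. Qed.

Lemma val_cv c z : AS c (Cmod z) -> Cseries_cv (fun n => Cscal (c n) (Defs.Cpow z n)) (val c z).
Proof.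
  intro H. split.
  - eapply Un_cv_ext. 2:{ apply is_series_Un. apply Series_correct. apply ex_series_Rabs. apply AS_re. exact H. }
    intro N. rewrite Csum_fst. reflexivity.
  - eapply Un_cv_ext. 2:{ apply is_series_Un. apply Series_correct. apply ex_series_Rabs. apply AS_im. exact H. }
    intro N. rewrite Csum_snd. reflexivity.
Qed.

Lemma Cseries_unique a S1 S2 : Cseries_cv a S1 -> Cseries_cv a S2 -> S1 = S2.
Proof.
  intros [H1 H2] [H3 H4]. destruct S1, S2. simpl in *. f_equal.
  eapply UL_sequence; eauto. eapply UL_sequence; eauto.
Qed.

Lemma is_series_R (a : nat -> R) : ex_series (fun n => Rabs (a n)) -> is_series a (Series a).
Proof. intro H. apply Series_correct. apply ex_series_Rabs. exact H. Qed.

Lemma AS_mul a b rho : 0 <= rho -> AS a rho -> AS b rho -> AS (mul a b) rho.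
Proof.
  intros Hr Ha Hb.
  assert (Ha' : ex_series (fun n => Rabs (Rabs (a n) * rho ^ n))).
  { eapply ex_series_ext; [|exact Ha]. intro n. rewrite Rabs_pos_eq. reflexivity.
    apply Rmult_le_pos. apply Rabs_pos. apply pow_le; auto. }
  assert (Hb' : ex_series (fun n => Rabs (Rabs (b n) * rho ^ n))).
  { eapply ex_series_ext; [|exact Hb]. intro n. rewrite Rabs_pos_eq. reflexivity.
    apply Rmult_le_pos. apply Rabs_pos. apply pow_le; auto. }
  assert (HM := is_series_mult _ _ _ _ (Series_correct _ Ha) (Series_correct _ Hb) Ha' Hb').
  unfold AS. apply (ex_series_le (fun n => Rabs (mul a b n) * rho ^ n) (fun n => S0 (fun k => Rabs (a k) * rho ^ k * (Rabs (b (n - k)%nat) * rho ^ (n - k)%nat)) n)); [| eexists; exact HM].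
  intro n. unfold norm; simpl; unfold abs; simpl.
  rewrite Rabs_mult, Rabs_Rabsolu. rewrite (Rabs_pos_eq (rho ^ n)) by (apply pow_le; auto).
  unfold mul. eapply Rle_trans. apply Rmult_le_compat_r. apply pow_le; auto. apply S0_abs.
  rewrite <- S0_scal_r. apply S0_le. intros i Hi. rewrite Rabs_mult.
  replace (rho ^ n) with (rho ^ i * rho ^ (n - i)) by (rewrite <- pow_add; f_equal; lia). right; ring.
Qed.

Lemma val_mul a b z : AS a (Cmod z) -> AS b (Cmod z) ->
  val (mul a b) z = Cmult (val a z) (val b z).
Proof.
  intros Ha Hb.
  assert (Rr := is_series_mult _ _ _ _ (is_series_R _ (AS_re a z Ha)) (is_series_R _ (AS_re b z Hb)) (AS_re a z Ha) (AS_re b z Hb)).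
  assert (Ii := is_series_mult _ _ _ _ (is_series_R _ (AS_im a z Ha)) (is_series_R _ (AS_im b z Hb)) (AS_im a z Ha) (AS_im b z Hb)).
  assert (Ri := is_series_mult _ _ _ _ (is_series_R _ (AS_re a z Ha)) (is_series_R _ (AS_im b z Hb)) (AS_re a z Ha) (AS_im b z Hb)).
  assert (Ir := is_series_mult _ _ _ _ (is_series_R _ (AS_im a z Ha)) (is_series_R _ (AS_re b z Hb)) (AS_im a z Ha) (AS_re b z Hb)).
  assert (Hsplit : forall n k, (k <= n)%nat -> Defs.Cpow z n = Cmult (Defs.Cpow z k) (Defs.Cpow z (n - k)%nat)).
  { intros n k Hk. rewrite <- Cpow_add. f_equal. lia. }
  unfold val, Cmult. simpl. f_equal.
  - apply is_series_unique.
    assert (HH := is_series_minus _ _ _ _ Rr Ii).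
    eapply is_series_ext; [| exact HH]. intro n. simpl.
    unfold plus, opp; simpl. unfold rre, rim, mul.
    rewrite <- (S0_opp _ n). rewrite <- S0_plus. rewrite <- S0_scal_r.
    apply S0_ext. intros k Hk. rewrite (Hsplit n k Hk). simpl. ring.
  - apply is_series_unique.
    assert (HH := is_series_plus _ _ _ _ Ri Ir).
    eapply is_series_ext; [| exact HH]. intro n. simpl.
    unfold plus; simpl. unfold rre, rim, mul.
    rewrite <- S0_plus. rewrite <- S0_scal_r.
    apply S0_ext. intros k Hk. rewrite (Hsplit n k Hk). simpl. ring.
Qed.

Lemma ex_le (a b : nat -> R) : (forall n, Rabs (a n) <= b n) -> ex_series b -> ex_series a.
Proof. intros H Hb. apply (ex_series_le a b); auto. Qed.

Lemma AS_nonneg c rho n : 0 <= rho -> 0 <= Rabs (c n) * rho ^ n.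
Proof. intro. apply Rmult_le_pos. apply Rabs_pos. apply pow_le; auto. Qed.

Lemma AS_sadd a b rho : 0 <= rho -> AS a rho -> AS b rho -> AS (sadd a b) rho.
Proof.
  intros Hr Ha Hb. unfold AS. apply (ex_le _ (fun n => Rabs (a n) * rho ^ n + Rabs (b n) * rho ^ n)).
  - intro n. unfold sadd. rewrite Rabs_mult, Rabs_Rabsolu, (Rabs_pos_eq (rho ^ n)) by (apply pow_le; auto).
    rewrite <- Rmult_plus_distr_r. apply Rmult_le_compat_r. apply pow_le; auto. apply Rabs_triang.
  - destruct Ha as [la Ha]. destruct Hb as [lb Hb]. eexists. apply (is_series_plus _ _ _ _ Ha Hb).
Qed.

Lemma AS_sscal k a rho : 0 <= rho -> AS a rho -> AS (sscal k a) rho.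
Proof.
  intros Hr Ha. unfold AS. apply (ex_le _ (fun n => Rabs k * (Rabs (a n) * rho ^ n))).
  - intro n. unfold sscal. rewrite Rabs_mult, Rabs_Rabsolu, (Rabs_pos_eq (rho ^ n)) by (apply pow_le; auto).
    rewrite Rabs_mult. right; ring.
  - destruct Ha as [la Ha]. eexists. apply (is_series_scal (K := R_AbsRing) (Rabs k) _ _ Ha).
Qed.

Lemma val_sadd a b z : AS a (Cmod z) -> AS b (Cmod z) -> val (sadd a b) z = Cplus (val a z) (val b z).
Proof.
  intros Ha Hb. unfold val, Cplus. simpl. f_equal.
  - apply is_series_unique. eapply is_series_ext; [|apply (is_series_plus _ _ _ _ (is_series_R _ (AS_re a z Ha)) (is_series_R _ (AS_re b z Hb)))].
    intro n. unfold rre, sadd, plus. simpl. ring.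
  - apply is_series_unique. eapply is_series_ext; [|apply (is_series_plus _ _ _ _ (is_series_R _ (AS_im a z Ha)) (is_series_R _ (AS_im b z Hb)))].
    intro n. unfold rim, sadd, plus. simpl. ring.
Qed.

Lemma val_sscal k a z : AS a (Cmod z) -> val (sscal k a) z = Cmult (RtoC k) (val a z).
Proof.
  intros Ha. unfold val, Cmult, RtoC. simpl. f_equal.
  - rewrite Rmult_0_l, Rminus_0_r. apply is_series_unique.
    eapply is_series_ext; [|apply (is_series_scal (K := R_AbsRing) k _ _ (is_series_R _ (AS_re a z Ha)))].
    intro n. unfold rre, sscal, scal. simpl. unfold mult; simpl. ring.
  - rewrite Rmult_0_l, Rplus_0_r. apply is_series_unique.
    eapply is_series_ext; [|apply (is_series_scal (K := R_AbsRing) k _ _ (is_series_R _ (AS_im a z Ha)))].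
    intro n. unfold rim, sscal, scal. simpl. unfold mult; simpl. ring.
Qed.

Lemma is_series_finite (a : nat -> R) D : (forall n, (D < n)%nat -> a n = 0) -> is_series a (sum_f_R0 a D).
Proof.
  intro H. change (is_lim_seq (sum_n a) (sum_f_R0 a D)). eapply is_lim_seq_ext_loc; [|apply is_lim_seq_const].
  exists D. intros n Hn. rewrite sum_n_Reals. symmetry. apply S0_widen. lia. intros i Hi. apply H. lia.
Qed.

Lemma AS_finite c D rho : (forall n, (D < n)%nat -> c n = 0) -> AS c rho.
Proof.
  intro H. eexists. apply (is_series_finite _ D). intros n Hn. rewrite H by auto. rewrite Rabs_R0. ring.
Qed.

Lemma val_finite c D z : (forall n, (D < n)%nat -> c n = 0) ->
  val c z = Csum (fun n => Cscal (c n) (Defs.Cpow z n)) D.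
Proof.
  intro H. unfold val. apply injective_projections; simpl.
  - rewrite Csum_fst. apply is_series_unique. apply is_series_finite. intros n Hn. unfold rre, Cscal. simpl. rewrite H by auto. ring.
  - rewrite Csum_snd. apply is_series_unique. apply is_series_finite. intros n Hn. unfold rim, Cscal. simpl. rewrite H by auto. ring.
Qed.

Lemma AS_bounded c K rho : 0 <= rho < 1 -> (forall n, Rabs (c n) <= K) -> AS c rho.
Proof.
  intros Hr H. unfold AS. apply (ex_le _ (fun n => K * rho ^ n)).
  - intro n. rewrite Rabs_mult, Rabs_Rabsolu, (Rabs_pos_eq (rho ^ n)) by (apply pow_le; lra).
    apply Rmult_le_compat_r. apply pow_le; lra. auto.
  - assert (Hg := is_series_geom rho ltac:(rewrite Rabs_pos_eq; lra)).
    eexists. apply (is_series_scal (K := R_AbsRing) K _ _ Hg).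
Qed.

Lemma AS_pw a rho k : 0 <= rho -> AS a rho -> AS (pw a k) rho.
Proof.
  intros Hr Ha. induction k. simpl. apply (AS_finite _ 0). intros n Hn. destruct n. lia. reflexivity.
  simpl. apply AS_mul; auto.
Qed.

Lemma val_one z : val sone z = RtoC 1.
Proof.
  rewrite (val_finite _ 0). simpl. unfold Cscal, RtoC, Defs.RtoC. simpl. f_equal; ring.
  intros n Hn. destruct n. lia. reflexivity.
Qed.

Lemma val_pw a z k : AS a (Cmod z) -> val (pw a k) z = Coquelicot.Complex.Cpow (val a z) k.
Proof.
  intro Ha. induction k. simpl. apply val_one.
  simpl pw. rewrite val_mul; auto. rewrite IHk. reflexivity. apply AS_pw; auto. apply Cmod_ge_0.
Qed.

Ltac cring := match goal with |- @eq _ ?a ?b => change (@eq C a b); ring end.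
Lemma Csum_S (f : nat -> C) n : Csum f (S n) = Cplus (Csum f n) (f (S n)).
Proof. reflexivity. Qed.

Lemma Csum_ext (f g : nat -> C) n : (forall i, (i <= n)%nat -> f i = g i) -> Csum f n = Csum g n.
Proof.
  intro H. induction n. simpl. apply H; lia. rewrite !Csum_S. rewrite IHn by (intros; apply H; lia).
  rewrite H by lia. reflexivity.
Qed.

Lemma Csum_plus (f g : nat -> C) n : Csum (fun i => Cplus (f i) (g i)) n = Cplus (Csum f n) (Csum g n).
Proof. induction n. reflexivity. rewrite !Csum_S, IHn. cring. Qed.

Lemma Csum_scal (c : C) (f : nat -> C) n : Csum (fun i => Cmult c (f i)) n = Cmult c (Csum f n).
Proof. induction n. reflexivity. rewrite !Csum_S, IHn. cring. Qed.

Lemma Csum_swap (g : nat -> nat -> C) n m :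
  Csum (fun i => Csum (fun j => g i j) m) n = Csum (fun j => Csum (fun i => g i j) n) m.
Proof.
  induction n. reflexivity. rewrite Csum_S, IHn. rewrite <- Csum_plus. apply Csum_ext. intros. reflexivity.
Qed.

Lemma Csum_zero (f : nat -> C) n : (forall i, (i <= n)%nat -> f i = RtoC 0) -> Csum f n = RtoC 0.
Proof.
  intro H. induction n. simpl. apply H; lia. rewrite Csum_S, IHn by (intros; apply H; lia).
  rewrite H by lia. cring.
Qed.

Lemma Csum_one (f : nat -> C) n k : (k <= n)%nat -> (forall i, (i <= n)%nat -> i <> k -> f i = RtoC 0) ->
  Csum f n = f k.
Proof.
  intros Hk H. induction n.
  - assert (k = 0)%nat by lia. subst. reflexivity.
  - rewrite Csum_S. destruct (Nat.eq_dec k (S n)).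
    + subst. rewrite Csum_zero. cring. intros; apply H; lia.
    + rewrite IHn. rewrite (H (S n)). cring. lia. lia. lia. intros; apply H; lia.
Qed.

Lemma Csum_mod (f : nat -> C) n : Cmod (Csum f n) <= S0 (fun i => Cmod (f i)) n.
Proof.
  induction n. simpl. lra. rewrite Csum_S. simpl S0. eapply Rle_trans. apply Cmod_triangle. lra.
Qed.

Lemma Csum_const1 n : Csum (fun _ => RtoC 1) n = RtoC (INR (S n)).
Proof.
  induction n. simpl. reflexivity. rewrite Csum_S, IHn. rewrite (S_INR (S n)).
  unfold RtoC, Cplus. simpl. f_equal; ring.
Qed.

Lemma Cgeom (w : C) n : Cmult (Cminus w (RtoC 1)) (Csum (fun l => Coquelicot.Complex.Cpow w l) n)
   = Cminus (Coquelicot.Complex.Cpow w (S n)) (RtoC 1).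
Proof.
  induction n. simpl. cring.
  rewrite Csum_S. rewrite Cmult_plus_distr_l. rewrite IHn. simpl. cring.
Qed.

Lemma Cgeom0 (w : C) n : w <> RtoC 1 -> Coquelicot.Complex.Cpow w (S n) = RtoC 1 ->
  Csum (fun l => Coquelicot.Complex.Cpow w l) n = RtoC 0.
Proof.
  intros H1 H2. assert (E := Cgeom w n). rewrite H2 in E.
  assert (Hn : Cminus w (RtoC 1) <> RtoC 0).
  { intro E2. apply H1. replace w with (Cplus (Cminus w (RtoC 1)) (RtoC 1)) by cring. rewrite E2. cring. }
  replace (Cminus (RtoC 1) (RtoC 1)) with (RtoC 0) in E by cring.
  apply (f_equal (Cmult (Cinv (Cminus w (RtoC 1))))) in E.
  rewrite Cmult_assoc, Cinv_l in E by auto. rewrite Cmult_1_l in E. rewrite E. cring.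
Qed.

Definition om (N : nat) : C := (cos (2 * PI / INR N), sin (2 * PI / INR N)).

Lemma om_pow N l : Coquelicot.Complex.Cpow (om N) l = (cos (2 * PI * INR l / INR N), sin (2 * PI * INR l / INR N)).
Proof.
  induction l.
  - simpl. unfold Rdiv. rewrite !Rmult_0_r, !Rmult_0_l. rewrite cos_0, sin_0. reflexivity.
  - rewrite S_INR. simpl Coquelicot.Complex.Cpow. rewrite IHl. unfold om, Cmult.
    replace (2 * PI * (INR l + 1) / INR N) with (2 * PI / INR N + 2 * PI * INR l / INR N)
      by (unfold Rdiv; ring).
    rewrite cos_plus, sin_plus. simpl. f_equal; ring.
Qed.

Lemma Cmod_cs a : Cmod (cos a, sin a) = 1.
Proof. unfold Cmod. simpl fst; simpl snd. rewrite <- sqrt_1. f_equal. rewrite <- (sin2_cos2 a). unfold Rsqr. ring. Qed.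

Lemma om_N N : (N <> 0)%nat -> Coquelicot.Complex.Cpow (om N) N = RtoC 1.
Proof.
  intro H. rewrite om_pow. replace (2 * PI * INR N / INR N) with (2 * PI).
  rewrite cos_2PI, sin_2PI. reflexivity. field. apply not_0_INR. auto.
Qed.

Lemma om_ne1 N m : (0 < m < 2 * N)%nat -> m <> N -> Coquelicot.Complex.Cpow (om N) m <> RtoC 1.
Proof.
  intros Hm HmN E. rewrite om_pow in E. injection E. intros _ Ec.
  assert (HN : 0 < INR N) by (apply lt_0_INR; lia).
  set (x := PI * INR m / INR N).
  replace (2 * PI * INR m / INR N) with (2 * x) in Ec by (unfold x; field; lra).
  rewrite cos_2a_sin in Ec.
  assert (Hs : sin x <> 0).
  { assert (Hx0 : 0 < x). { unfold x. apply Rdiv_lt_0_compat; [|lra]. apply Rmult_lt_0_compat. apply PI_RGT_0. apply lt_0_INR; lia. }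
    destruct (lt_dec m N) as [Hlt|Hge].
    - assert (x < PI). { unfold x. apply (Rmult_lt_reg_r (INR N)); auto. field_simplify; [|lra].
        assert (INR m < INR N) by (apply lt_INR; lia). assert (PI > 0) by apply PI_RGT_0. nra. }
      assert (0 < sin x) by (apply sin_gt_0; lra). lra.
    - assert (PI < x). { unfold x. apply (Rmult_lt_reg_r (INR N)); auto. field_simplify; [|lra].
        assert (INR N < INR m) by (apply lt_INR; lia). assert (PI > 0) by apply PI_RGT_0. nra. }
      assert (x < 2 * PI). { unfold x. apply (Rmult_lt_reg_r (INR N)); auto. field_simplify; [|lra].
        assert (INR m < 2 * INR N). { replace (2 * INR N) with (INR (2 * N)) by (rewrite mult_INR; simpl; ring). apply lt_INR. lia. } assert (PI > 0) by apply PI_RGT_0. nra. }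
      assert (sin x < 0) by (apply sin_lt_0; lra). lra. }
  assert (sin x * sin x > 0). { destruct (Rlt_or_le 0 (sin x)). nra. assert (sin x < 0) by lra. nra. }
  lra.
Qed.

Lemma Cscal_eq (x : R) (z : C) : Cscal x z = Cmult (RtoC x) z.
Proof. unfold Cscal, Cmult, RtoC. simpl. f_equal; ring. Qed.

Lemma S0_const (B : R) n : S0 (fun _ => B) n = INR (S n) * B.
Proof. induction n. simpl. ring. simpl S0. rewrite IHn. rewrite (S_INR (S n)). ring. Qed.

Lemma cauchy_est (c : ser) (D : nat) (r B : R) : 0 < r -> (forall n, (D < n)%nat -> c n = 0) ->
  (forall z : C, Cmod z = r -> Cmod (val c z) <= B) -> forall k, Rabs (c k) * r ^ k <= B.
Proof.
  intros Hr Hs HB k.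
  assert (HB0 : 0 <= B).
  { eapply Rle_trans; [apply Cmod_ge_0|]. apply (HB (RtoC r)). rewrite Cmod_R. apply Rabs_pos_eq. lra. }
  destruct (le_lt_dec k D) as [Hk|Hk].
  2:{ rewrite Hs by auto. rewrite Rabs_R0. lra. }
  set (N := S D). set (w := om N).
  assert (HN : (N <> 0)%nat) by (unfold N; lia).
  assert (Hw1 : Cmod w = 1) by apply Cmod_cs.
  assert (Hwl : forall l, Cmod (Coquelicot.Complex.Cpow w l) = 1).
  { intro l. rewrite Cmod_pow, Hw1. apply pow1. }
  set (L := Csum (fun l => Cmult (val c (Cmult (RtoC r) (Coquelicot.Complex.Cpow w l)))
               (Coquelicot.Complex.Cpow w (l * (N - k)))) D).
  assert (Eq : L = RtoC (INR N * (c k * r ^ k))).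
  { unfold L.
    transitivity (Csum (fun l => Csum (fun i => Cmult (RtoC (c i * r ^ i))
         (Coquelicot.Complex.Cpow (Coquelicot.Complex.Cpow w (i + (N - k))) l)) D) D).
    - apply Csum_ext. intros l Hl. rewrite (val_finite c D) by auto.
      rewrite Cmult_comm. rewrite <- Csum_scal. apply Csum_ext. intros i Hi.
      rewrite Cscal_eq. rewrite (Cpow_eq (Cmult (RtoC r) (Coquelicot.Complex.Cpow w l)) i).
      assert (E1 : Coquelicot.Complex.Cpow (Cmult (RtoC r) (Coquelicot.Complex.Cpow w l)) i
                   = Cmult (RtoC (r ^ i)) (Coquelicot.Complex.Cpow w (l * i))).
      { rewrite Cpow_mult_l, <- Cpow_mult_r, RtoC_pow. reflexivity. }
      assert (E2 : Coquelicot.Complex.Cpow (Coquelicot.Complex.Cpow w (i + (N - k))) l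
                   = Cmult (Coquelicot.Complex.Cpow w (l * i)) (Coquelicot.Complex.Cpow w (l * (N - k)))).
      { rewrite <- Cpow_mult_r, <- Cpow_add_r. f_equal. lia. }
      rewrite E1, E2.
      replace (RtoC (c i * r ^ i)) with (Cmult (RtoC (c i)) (RtoC (r ^ i))) by (unfold RtoC, Cmult; simpl; f_equal; ring).
      cring.
    - rewrite Csum_swap.
      transitivity (Csum (fun i => Cmult (RtoC (c i * r ^ i))
          (Csum (fun l => Coquelicot.Complex.Cpow (Coquelicot.Complex.Cpow w (i + (N - k))) l) D)) D).
      { apply Csum_ext. intros. apply Csum_scal. }
      rewrite (Csum_one _ D k Hk).
      + replace (k + (N - k))%nat with N by lia. unfold w. rewrite om_N by auto.
        rewrite (Csum_ext _ (fun _ => RtoC 1)). rewrite Csum_const1. fold N.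
        unfold RtoC, Cmult. simpl. f_equal; ring.
        intros. apply Cpow_1_l.
      + intros i Hi Hik. rewrite Cgeom0. cring.
        apply om_ne1. lia. lia.
        rewrite <- Cpow_mult_r. rewrite Nat.mul_comm. rewrite Cpow_mult_r. fold N. unfold w. rewrite om_N by auto.
        apply Cpow_1_l. }
  assert (Bd : Cmod L <= INR N * B).
  { unfold L. eapply Rle_trans. apply Csum_mod. fold N. unfold N. rewrite <- S0_const.
    apply S0_le. intros l Hl. rewrite Cmod_mult, Hwl, Rmult_1_r. apply HB.
    rewrite Cmod_mult, Hwl, Cmod_R. rewrite Rabs_pos_eq; lra. }
  rewrite Eq in Bd. rewrite Cmod_R in Bd. rewrite !Rabs_mult in Bd.
  rewrite Rabs_pos_eq in Bd by (apply pos_INR). rewrite (Rabs_pos_eq (r ^ k)) in Bd by (apply pow_le; lra).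
  assert (0 < INR N) by (apply lt_0_INR; lia).
  apply (Rmult_le_reg_l (INR N)). auto. exact Bd.
Qed.

Definition rr (t : R) : R := if Rle_dec t 2 then sqrt (2 / t) else 1.

Lemma rr_pos t : 0 < t -> 0 < rr t.
Proof. intro Ht. unfold rr. destruct (Rle_dec t 2). apply sqrt_lt_R0. apply Rdiv_lt_0_compat; lra. lra. Qed.

Lemma Cmod_sq (w : C) : Cmod w ^ 2 = fst w ^ 2 + snd w ^ 2.
Proof. unfold Cmod. rewrite pow2_sqrt. reflexivity. apply Rplus_le_le_0_compat; apply pow2_ge_0. Qed.

Lemma sq_le (a b : R) : 0 <= a -> 0 <= b -> a ^ 2 <= b ^ 2 -> a <= b.
Proof. intros. nra. Qed.

Lemma exp_sq u : exp u ^ 2 = exp (2 * u).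
Proof. rewrite exp_pow_INR. f_equal. Qed.

Lemma bound_2z t z : 0 < t -> Cmod z = rr t ->
  Cmod (Cplus (RtoC 2) z) <= rr t * exp (t * (fst z + 1)).
Proof.
  intros Ht Hz. apply sq_le. apply Cmod_ge_0.
  apply Rmult_le_pos. left; apply rr_pos; auto. left; apply exp_pos.
  rewrite Cmod_sq. assert (Hz2 := Cmod_sq z). rewrite Hz in Hz2.
  destruct z as [x y]. unfold Cplus, RtoC in *. cbn [fst snd] in *. rewrite Rpow_mult_distr, exp_sq.
  assert (E := exp_ineq1_le (2 * (t * (x + 1)))).
  unfold rr in *. destruct (Rle_dec t 2).
  - rewrite pow2_sqrt in * by (apply Rlt_le, Rdiv_lt_0_compat; lra).
    assert (HH : 2 / t * (1 + 2 * (t * (x + 1))) <= 2 / t * exp (2 * (t * (x + 1)))).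
    { apply Rmult_le_compat_l; [|lra]. apply Rlt_le, Rdiv_lt_0_compat; lra. }
    replace (2 / t * (1 + 2 * (t * (x + 1)))) with (2 / t + 4 * (x + 1)) in HH by (field; lra).
    nra.
  - assert (x >= -1) by nra.
    assert (1 + 2 * (t * (x + 1)) >= 1 + 4 * (x + 1)) by nra. nra.
Qed.

Lemma bound_1cz c z r : Cmod z = r ->
  Cmod (Cminus (RtoC 1) (Cmult (RtoC c) z)) <= exp (- c * fst z + c ^ 2 * r ^ 2 / 2).
Proof.
  intros Hz. apply sq_le. apply Cmod_ge_0. left; apply exp_pos.
  rewrite Cmod_sq. assert (Hz2 := Cmod_sq z). rewrite Hz in Hz2.
  destruct z as [x y]. unfold Cminus, Cplus, Copp, Cmult, RtoC in *. cbn [fst snd] in *. rewrite exp_sq.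
  assert (E := exp_ineq1_le (2 * (- c * x + c ^ 2 * r ^ 2 / 2))). nra.
Qed.

Lemma mul_supp a b A B' : (forall n, (A < n)%nat -> a n = 0) -> (forall n, (B' < n)%nat -> b n = 0) ->
  forall n, (A + B' < n)%nat -> mul a b n = 0.
Proof.
  intros Ha Hb n Hn. unfold mul. apply S0_zero. intros i Hi.
  destruct (le_lt_dec i A). rewrite Hb by lia. ring. rewrite Ha by lia. ring.
Qed.

Lemma bc_big M i : (M < i)%nat -> bc M i = 0.
Proof. intro H. unfold bc. rewrite (proj2 (Nat.leb_gt i M)) by lia. reflexivity. Qed.

Lemma binS_supp a b M : forall n, (M < n)%nat -> pw (binS a b) M n = 0.
Proof. intros n Hn. rewrite pw_binS, bc_big by auto. ring. Qed.

Lemma val_binS a b z : val (binS a b) z = Cplus (RtoC a) (Cmult (RtoC b) z).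
Proof.
  rewrite (val_finite _ 1). simpl. rewrite !Cscal_eq. change (Defs.RtoC 1) with (RtoC 1).
  change (Defs.Cmul z (RtoC 1)) with (Cmult z (RtoC 1)). change (Defs.Cadd ?a ?b) with (Cplus a b). cring.
  intros n Hn. destruct n. lia. destruct n. lia. reflexivity.
Qed.

Lemma lim_invM : is_lim_seq (fun M => / INR M) 0.
Proof.
  assert (H := is_lim_seq_inv _ _ is_lim_seq_INR ltac:(discriminate)). simpl in H. exact H.
Qed.

Lemma bc_S M q : bc M (S q) = bc M q * (INR M - INR q) / INR (S q).
Proof.
  destruct (le_lt_dec (S q) M).
  - unfold bc. rewrite (proj2 (Nat.leb_le (S q) M)) by lia. rewrite (proj2 (Nat.leb_le q M)) by lia.
    rewrite Binomial.pascal_step3 by lia. rewrite minus_INR by lia. field. apply not_0_INR; lia.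
  - rewrite (bc_big M (S q)) by lia. destruct (Nat.eq_dec q M).
    + subst. unfold Rminus. rewrite Rplus_opp_r. unfold Rdiv. ring.
    + rewrite bc_big by lia. unfold Rdiv. ring.
Qed.

Lemma lim_bc q : is_lim_seq (fun M => bc M q / INR M ^ q) (/ INR (fact q)).
Proof.
  induction q.
  - simpl. eapply is_lim_seq_ext; [|apply is_lim_seq_const]. intro M. simpl. rewrite bc_0. field.
  - assert (H2 : is_lim_seq (fun M => (1 - INR q * / INR M) / INR (S q)) (/ INR (S q))).
    { replace (/ INR (S q)) with ((1 - INR q * 0) / INR (S q)) by (field; apply not_0_INR; lia).
      apply (is_lim_seq_scal_r (fun M => 1 - INR q * / INR M) (/ INR (S q)) (1 - INR q * 0)).
      apply is_lim_seq_minus'. apply is_lim_seq_const. apply (is_lim_seq_scal_l _ (INR q) 0). apply lim_invM. }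
    assert (HH := is_lim_seq_mult' _ _ _ _ IHq H2).
    replace (/ INR (fact (S q))) with (/ INR (fact q) * / INR (S q)).
    2:{ rewrite fact_simpl, mult_INR. field. split. apply fact_neq0. apply not_0_INR; lia. }
    eapply is_lim_seq_ext_loc; [|exact HH]. exists 1%nat. intros M HM.
    rewrite bc_S. simpl pow. field. repeat split; try apply pow_nonzero; apply not_0_INR; lia.
Qed.

Lemma lim_powL q s : is_lim_seq (fun M => pw (binS 1 (- (s / INR M))) M q) (expS (- s) q).
Proof.
  assert (H := is_lim_seq_scal_r _ ((- s) ^ q) _ (lim_bc q)). simpl in H.
  eapply is_lim_seq_ext_loc; [| unfold expS; replace ((- s) ^ q / INR (fact q)) with (/ INR (fact q) * (- s) ^ q) by (unfold Rdiv; ring); exact H].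
  exists 1%nat. intros M HM. rewrite pw_binS. rewrite pow1.
  replace (- (s / INR M)) with ((- s) * / INR M) by (unfold Rdiv; ring).
  rewrite Rpow_mult_distr, pow_inv. field. apply pow_nonzero. apply not_0_INR. lia.
Qed.

Lemma lim_S0 (f : nat -> nat -> R) (g : nat -> R) k :
  (forall i, (i <= k)%nat -> is_lim_seq (fun M => f M i) (g i)) ->
  is_lim_seq (fun M => S0 (f M) k) (S0 g k).
Proof.
  intro H. induction k. simpl. apply H. lia.
  simpl S0. apply is_lim_seq_plus'. apply IHk. intros; apply H; lia. apply H; lia.
Qed.

Lemma lim_coef j k s : is_lim_seq (fun M => mul (pw Pp j) (pw (binS 1 (- (s / INR M))) M) k)
  (mul (pw Pp j) (expS (- s)) k).
Proof.
  unfold mul. apply (lim_S0 (fun M i => pw Pp j i * pw (binS 1 (- (s / INR M))) M (k - i)%nat)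
      (fun i => pw Pp j i * expS (- s) (k - i)%nat)).
  intros i Hi. apply (is_lim_seq_scal_l _ (pw Pp j i) (expS (- s) (k - i)%nat)). apply lim_powL.
Qed.

Lemma lim_exp_inv d : is_lim_seq (fun M => exp (d * / INR M)) 1.
Proof.
  rewrite <- exp_0. apply is_lim_seq_continuous. apply derivable_continuous_pt. apply derivable_pt_exp.
  replace 0 with (d * 0) by ring. apply (is_lim_seq_scal_l _ d 0). apply lim_invM.
Qed.

Lemma phi_bound t j k : 0 < t -> (k <= j)%nat -> Rabs (pw (phi t) j k) <= rr t ^ (j - k).
Proof.
  intros Ht Hkj.
  set (r := rr t). assert (Hr : 0 < r) by (apply rr_pos; auto).
  set (s := t * INR j).
  set (K := r ^ j * exp s).
  set (a := mul (pw Pp j) (expS (- s)) k).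
  assert (Hbound : forall M, (1 <= M)%nat ->
     Rabs (mul (pw Pp j) (pw (binS 1 (- (s / INR M))) M) k) * r ^ k <= K * exp (s ^ 2 * r ^ 2 / 2 * / INR M)).
  { intros M HM. apply (cauchy_est _ (j + M)). auto.
    apply mul_supp. apply binS_supp. apply binS_supp.
    intros z Hz. set (cM := s / INR M).
    assert (HASP : AS Pp (Cmod z)) by (apply (AS_finite _ 1); intros n Hn; destruct n; [lia|destruct n; [lia|reflexivity]]).
    assert (HASL : AS (binS 1 (- cM)) (Cmod z)) by (apply (AS_finite _ 1); intros n Hn; destruct n; [lia|destruct n; [lia|reflexivity]]).
    rewrite val_mul by (apply AS_pw; auto; apply Cmod_ge_0).
    rewrite !val_pw by auto. unfold Pp. rewrite !val_binS.
    rewrite Cmod_mult, !Cmod_pow.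
    assert (B1 := bound_2z t z Ht Hz). fold r in B1.
    assert (B2 := bound_1cz cM z r Hz).
    replace (Cplus (RtoC 2) (Cmult (RtoC 1) z)) with (Cplus (RtoC 2) z) in * by cring.
    replace (Cplus (RtoC 1) (Cmult (RtoC (- cM)) z)) with (Cminus (RtoC 1) (Cmult (RtoC cM) z)).
    2:{ unfold Cminus, Cplus, Copp, Cmult, RtoC. simpl. f_equal; ring. }
    eapply Rle_trans.
    { apply Rmult_le_compat. apply pow_le, Cmod_ge_0. apply pow_le, Cmod_ge_0.
      apply pow_incr. split. apply Cmod_ge_0. exact B1.
      apply pow_incr. split. apply Cmod_ge_0. exact B2. }
    rewrite Rpow_mult_distr, !exp_pow_INR. unfold K. rewrite Rmult_assoc, Rmult_assoc. apply Rmult_le_compat_l.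
    apply pow_le; lra. rewrite <- !exp_plus. right. f_equal. unfold cM, s.
    field. apply not_0_INR. lia. }
  assert (Hlim := lim_coef j k s).
  assert (Hlim2 : is_lim_seq (fun M => Rabs (mul (pw Pp j) (pw (binS 1 (- (s / INR M))) M) k) * r ^ k) (Rabs a * r ^ k)).
  { apply (is_lim_seq_scal_r _ (r ^ k) (Rabs a)). apply (is_lim_seq_abs _ a). exact Hlim. }
  assert (Hlim3 : is_lim_seq (fun M => K * exp (s ^ 2 * r ^ 2 / 2 * / INR M)) K).
  { replace (Finite K) with (Rbar_mult K 1) by (simpl; f_equal; ring). apply is_lim_seq_scal_l. apply lim_exp_inv. }
  assert (Hle := is_lim_seq_le_loc _ _ _ _ (ex_intro _ 1%nat Hbound) Hlim2 Hlim3). simpl in Hle.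
  assert (Hphi : pw (phi t) j k = exp (- s) * a).
  { rewrite pw_phi. unfold sscal, a, s. rewrite exp_pow_INR. f_equal. f_equal. ring. f_equal. f_equal. ring. }
  rewrite Hphi. rewrite Rabs_mult, Rabs_pos_eq by (left; apply exp_pos).
  apply (Rmult_le_reg_r (r ^ k)). apply pow_lt; auto.
  rewrite <- pow_add. replace (j - k + k)%nat with j by lia.
  unfold K in Hle. rewrite Rmult_assoc.
  apply (Rmult_le_reg_l (exp s)). apply exp_pos.
  replace (exp s * (exp (- s) * (Rabs a * r ^ k))) with (Rabs a * r ^ k).
  2:{ rewrite <- Rmult_assoc, <- exp_plus. replace (s + - s) with 0 by ring. rewrite exp_0. ring. }
  lra.
Qed.

Lemma alpha_bound t n : 0 < t -> Rabs (alpha t n) <= rr t.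
Proof.
  intro Ht. unfold alpha. destruct n. rewrite Rabs_R0. left; apply rr_pos; auto.
  unfold Rdiv. rewrite Rabs_mult. rewrite Rabs_Rinv by (apply not_0_INR; lia).
  rewrite (Rabs_pos_eq (INR (S n))) by apply pos_INR.
  assert (H := phi_bound t (S n) n Ht ltac:(lia)). replace (S n - n)%nat with 1%nat in H by lia.
  rewrite pow_1 in H.
  assert (1 <= INR (S n)) by (rewrite S_INR; assert (0 <= INR n) by apply pos_INR; lra).
  apply (Rmult_le_reg_r (INR (S n))). lra. rewrite Rmult_assoc, Rinv_l by lra.
  assert (0 < rr t) by (apply rr_pos; auto). nra.
Qed.

Lemma G_bound t p n : 0 < t -> Rabs (G t p n) <= rr t ^ p.
Proof.
  intro Ht. unfold G. destruct (Nat.leb p n) eqn:E.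
  - apply Nat.leb_le in E. assert (H := phi_bound t n (n - p) Ht ltac:(lia)).
    replace (n - (n - p))%nat with p in H by lia. exact H.
  - rewrite Rabs_R0. apply pow_le. left; apply rr_pos; auto.
Qed.

Lemma Un_cv_shift (u : nat -> R) l p : Un_cv u l -> Un_cv (fun N => u (N + p)%nat) l.
Proof.
  intros H eps He. destruct (H eps He) as [N HN]. exists N. intros n Hn. apply HN. lia.
Qed.

Lemma Csum_shift (b : nat -> Cplx) p N : (forall j, (j < p)%nat -> b j = Defs.RtoC 0) ->
  Csum (fun n => b (n + p)%nat) N = Csum b (N + p).
Proof.
  intro Hz. induction N.
  - simpl. destruct p. reflexivity.
    transitivity (Cplus (Csum b p) (b (S p))). 2: reflexivity.
    rewrite (Csum_zero b p). change (Defs.RtoC 0) with (RtoC 0). rewrite Cplus_0_l. reflexivity.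
    intros; apply Hz; lia.
  - simpl. rewrite IHN. reflexivity.
Qed.

Lemma Cseries_shift (b : nat -> Cplx) L p : (forall j, (j < p)%nat -> b j = Defs.RtoC 0) ->
  Cseries_cv b L -> Cseries_cv (fun n => b (n + p)%nat) L.
Proof.
  intros Hz [H1 H2]. split.
  - eapply Un_cv_ext. 2: apply (Un_cv_shift _ _ p H1). intro N. simpl. rewrite Csum_shift; auto.
  - eapply Un_cv_ext. 2: apply (Un_cv_shift _ _ p H2). intro N. simpl. rewrite Csum_shift; auto.
Qed.

Lemma Cpow_Cscal c (y : Cplx) j : Defs.Cpow (Cscal c y) j = Cscal (c ^ j) (Defs.Cpow y j).
Proof.
  induction j. simpl. unfold Cscal, Defs.RtoC. simpl. f_equal; ring.
  simpl Defs.Cpow. rewrite IHj. unfold Cscal, Defs.Cmul. simpl. f_equal; ring.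
Qed.

Lemma Cmult_integral (a b : C) : Cmult a b = RtoC 0 -> a = RtoC 0 \/ b = RtoC 0.
Proof.
  intro H. destruct (classic (a = RtoC 0)) as [Ha|Ha]. left; auto. right.
  apply (f_equal (Cmult (Cinv a))) in H. rewrite Cmult_assoc, Cinv_l in H by auto.
  rewrite Cmult_1_l in H. rewrite H. cring.
Qed.

Lemma RtoC_2_nz : RtoC 2 <> RtoC 0.
Proof. intro H. injection H. lra. Qed.

Lemma final_alg (t : R) (U F : C) (m : nat) :
  Cmult (Cplus (Cplus (RtoC 2) (Cmult (RtoC (2 * t)) U)) (Cmult (RtoC t) (Coquelicot.Complex.Cpow U 2))) F
    = Cmult (Cplus (Cmult (RtoC 2) U) (Coquelicot.Complex.Cpow U 2)) (Coquelicot.Complex.Cpow U m) ->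
  F = Cmult (Cdiv (Cminus (Cmult (Cplus (RtoC 1) U) (Cplus (RtoC 1) U)) (RtoC 1))
              (Cplus (Cmult (RtoC t) (Cmult (Cplus (RtoC 1) U) (Cplus (RtoC 1) U))) (RtoC (2 - t))))
            (Coquelicot.Complex.Cpow (Cminus (Cplus (RtoC 1) U) (RtoC 1)) m).
Proof.
  intro H. rewrite RtoC_mult in H. rewrite RtoC_minus.
  set (D := Cplus (Cplus (RtoC 2) (Cmult (Cmult (RtoC 2) (RtoC t)) U)) (Cmult (RtoC t) (Coquelicot.Complex.Cpow U 2))) in H.
  assert (HD : D <> RtoC 0).
  { intro HD. rewrite HD in H. replace (Cmult (RtoC 0) F) with (RtoC 0) in H by cring.
    symmetry in H. destruct (Cmult_integral _ _ H) as [H1|H1].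
    - replace (Cplus (Cmult (RtoC 2) U) (Coquelicot.Complex.Cpow U 2)) with (Cmult U (Cplus (RtoC 2) U)) in H1 by (simpl; cring).
      destruct (Cmult_integral _ _ H1) as [H2|H2].
      + unfold D in HD. rewrite H2 in HD. apply RtoC_2_nz. rewrite <- HD. simpl. cring.
      + assert (U = Copp (RtoC 2)). { replace U with (Cminus (Cplus (RtoC 2) U) (RtoC 2)) by cring. rewrite H2. cring. }
        unfold D in HD. rewrite H0 in HD. apply RtoC_2_nz. rewrite <- HD. simpl. cring.
    - destruct (classic (U = RtoC 0)) as [HU|HU].
      + unfold D in HD. rewrite HU in HD. apply RtoC_2_nz. rewrite <- HD. simpl. cring.
      + apply (Cpow_nz U m HU). exact H1. }
  replace (Cplus (Cmult (RtoC t) (Cmult (Cplus (RtoC 1) U) (Cplus (RtoC 1) U))) (Cminus (RtoC 2) (RtoC t))) with D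
    by (unfold D; simpl; cring).
  replace (Cminus (Cplus (RtoC 1) U) (RtoC 1)) with U by cring.
  apply (f_equal (Cmult (Cinv D))) in H. rewrite Cmult_assoc, Cinv_l in H by auto. rewrite Cmult_1_l in H.
  rewrite H. unfold Cdiv. replace (Cminus (Cmult (Cplus (RtoC 1) U) (Cplus (RtoC 1) U)) (RtoC 1))
    with (Cplus (Cmult (RtoC 2) U) (Coquelicot.Complex.Cpow U 2)) by (simpl; cring).
  cring.
Qed.

Theorem main_aux (t : R) (ht : 0 < t) (m : nat) (hm : (1 <= m)%nat)
  (y : Cplx) (hy : Defs.Cmod y < 1) :
  exists S : Cplx,
    Cseries_cv
      (fun n => Cscal (Laguerre n (INR (m + 1)) (2 * INR (n + m + 1) * t))
                      (Defs.Cpow (Cscal (exp (- t)) y) (n + m + 1))) S /\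
    Cscal (2 ^ (m + 1)) S =
    Defs.Cmul
      (Defs.Cdiv (Csub (Defs.Cmul (K2t t y) (K2t t y)) (Defs.RtoC 1))
            (Cadd (Cscal t (Defs.Cmul (K2t t y) (K2t t y))) (Defs.RtoC (2 - t))))
      (Defs.Cpow (Csub (K2t t y) (Defs.RtoC 1)) m).
Proof.
  assert (Hrho : 0 <= Cmod y < 1) by (split; [apply Cmod_ge_0 | exact hy]).
  set (al := alpha t).
  set (f := Fser t m).
  assert (ASal : AS al (Cmod y)) by (apply (AS_bounded _ (rr t)); auto; intro n; apply alpha_bound; auto).
  assert (ASf : AS f (Cmod y)) by (apply (AS_bounded _ (rr t ^ (m + 1))); auto; intro n; apply G_bound; auto).
  set (f' := sscal (/ 2 ^ (m + 1)) f).
  assert (ASf' : AS f' (Cmod y)) by (apply AS_sscal; auto; lra).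
  exists (val f' y). split.
  -
    assert (Hcv := val_cv f' y ASf').
    assert (Hz : forall j, (j < m + 1)%nat -> (fun n => Cscal (f' n) (Defs.Cpow y n)) j = Defs.RtoC 0).
    { intros j Hj. cbv beta. unfold f', f, Fser, sscal. rewrite G_val by lia.
      unfold Cscal, Defs.RtoC. f_equal; ring. }
    assert (Hsh := Cseries_shift _ _ (m + 1) Hz Hcv).
    replace (fun n => Cscal (Laguerre n (INR (m + 1)) (2 * INR (n + m + 1) * t))
                      (Defs.Cpow (Cscal (exp (- t)) y) (n + m + 1)))
      with (fun n => (fun n => Cscal (f' n) (Defs.Cpow y n)) (n + (m + 1))%nat). exact Hsh.
    apply functional_extensionality. intro n. cbv beta.
    replace (n + m + 1)%nat with (n + (m + 1))%nat by lia.
    rewrite Cpow_Cscal. unfold f', f, Fser, sscal, G.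
    rewrite (proj2 (Nat.leb_le (m + 1) (n + (m + 1)))) by lia.
    replace (n + (m + 1) - (m + 1))%nat with n by lia.
    rewrite Phi_Laguerre. rewrite exp_pow_INR.
    unfold Cscal. f_equal.
    + simpl. field_simplify. replace (INR (n + (m + 1)) * - t) with (- INR (n + (m + 1)) * t) by ring. ring.
      apply pow_nonzero. lra.
    + simpl. field_simplify. replace (INR (n + (m + 1)) * - t) with (- INR (n + (m + 1)) * t) by ring. ring.
      apply pow_nonzero. lra.
  - set (ka := sadd sone al).
    assert (ASone : AS sone (Cmod y)) by (apply (AS_finite _ 0); intros n Hn; destruct n; [lia|reflexivity]).
    assert (ASka : AS ka (Cmod y)) by (apply AS_sadd; auto; lra).
    assert (HK : K2t t y = val ka y).
    { assert (Hcv : Cseries_cv (Kterm t y) (val ka y)).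
      { replace (Kterm t y) with (fun n => Cscal (ka n) (Defs.Cpow y n)). apply val_cv. exact ASka.
        apply functional_extensionality. intro n. unfold ka, sadd, sone, al, alpha, Kterm. destruct n.
        - simpl. unfold Cscal, Defs.RtoC. simpl. f_equal; ring.
        - f_equal. replace (pw (phi t) (S n) n) with (pw (phi t) (n + 1) n) by (f_equal; lia).
          rewrite Phi_Laguerre. replace (n + 1)%nat with (S n) by lia. change (INR 1) with 1. field. apply not_0_INR. lia. }
      unfold K2t. apply (Cseries_unique (Kterm t y)).
      apply epsilon_spec. exists (val ka y). exact Hcv. exact Hcv. }
    set (U := val al y).
    assert (HKU : val ka y = Cplus (RtoC 1) U).
    { unfold ka. rewrite val_sadd by auto. rewrite val_one. reflexivity. }
    assert (HF : val f y = Cmult (RtoC (2 ^ (m + 1))) (val f' y)).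
    { rewrite <- val_sscal by auto. f_equal. apply functional_extensionality. intro n. unfold f', sscal.
      field. apply pow_nonzero. lra. }
    assert (Hid := formal_identity t m). fold al in Hid. fold f in Hid.
    apply (f_equal (fun s => val s y)) in Hid.
    assert (AS2 : AS (pw al 2) (Cmod y)) by (apply AS_pw; auto; lra).
    assert (ASm : AS (pw al m) (Cmod y)) by (apply AS_pw; auto; lra).
    rewrite val_mul in Hid.
    2:{ apply AS_sadd. lra. apply AS_sadd. lra. apply AS_sscal; auto; lra. apply AS_sscal; auto; lra. apply AS_sscal; auto; lra. }
    2: exact ASf.
    rewrite val_mul in Hid.
    2:{ apply AS_sadd. lra. apply AS_sscal; auto; lra. exact AS2. }
    2: exact ASm.
    rewrite !val_sadd in Hid; try (apply AS_sscal; auto; lra); try (apply AS_sadd; auto; try lra; apply AS_sscal; auto; lra); auto.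
    rewrite !val_sscal in Hid by auto. rewrite !val_pw in Hid by auto. rewrite val_one in Hid. fold U in Hid.
    rewrite HF in Hid.
    assert (Hfin := final_alg t U (Cmult (RtoC (2 ^ (m + 1))) (val f' y)) m).
    rewrite Cscal_eq. rewrite HK, HKU.
    replace (Cmult (RtoC 2) (RtoC 1)) with (RtoC 2) in Hid by cring.
    rewrite (Cpow_eq (Csub (Cplus (RtoC 1) U) (Defs.RtoC 1)) m).
    rewrite Cscal_eq.
    apply Hfin. exact Hid.
Qed.

End Aux.

Theorem mainTheorem6 (t : R) (ht : 0 < t) (m : nat) (hm : (1 <= m)%nat)
  (y : Cplx) (hy : Cmod y < 1) :
  exists S : Cplx,
    (* S = sum_{j >= m+1} L_{j-m-1}^{(m+1)}(2jt) (e^{-t} y)^j, indexed by n = j-m-1 *)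
    Cseries_cv
      (fun n => Cscal (Laguerre n (INR (m + 1)) (2 * INR (n + m + 1) * t))
                      (Cpow (Cscal (exp (- t)) y) (n + m + 1))) S /\
    Cscal (2 ^ (m + 1)) S =
    Cmul
      (Cdiv (Csub (Cmul (K2t t y) (K2t t y)) (RtoC 1))
            (Cadd (Cscal t (Cmul (K2t t y) (K2t t y))) (RtoC (2 - t))))
      (Cpow (Csub (K2t t y) (RtoC 1)) m).
Proof.
  exact (Aux.main_aux t ht m hm y hy).
Qed.
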